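(* Let $k\geq 1$ be fixed and $p\neq 0$ real. The inequality $$\frac{2}{k+2}\left( \frac{\sin x}{x}\right) ^{kp}+\frac{k}{k+2}\left( \frac{\tan x}{x}\right) ^{p}<1$$ holds for all $x\in (0,\pi/2)$ if and only if $-\dfrac{12}{5(k+2)}\leq p<0$. *)

(* Defs.v *)
From Stdlib Require Export Reals.

(* Main.v *)
Require Import Defs.
From Stdlib Require Import Reals Lra Lia Factorial.
From Coquelicot Require Import Coquelicot.
Open Scope R_scope.


Lemma pow_le_up : forall h n D, 0 <= h -> h <= D -> h ^ n <= D ^ n.
Proof. intros. apply pow_incr. lra. Qed.

Lemma mono0 : forall (h dh : R -> R) (a b : R), a <= b ->
  (forall y, a <= y <= b -> is_derive h y (dh y)) ->
  (forall y, a <= y <= b -> 0 <= dh y) -> h a <= h b.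
Proof.
  intros h dh a b Hab Hd Hp.
  destruct (Req_dec a b) as [E|NE]. { subst; lra. }
  destruct (MVT_cor2 h dh a b) as [c [Hc1 Hc2]].
  - lra.
  - intros c Hc. apply is_derive_Reals. apply Hd. lra.
  - assert (0 <= dh c) by (apply Hp; lra).
    assert (0 <= dh c * (b - a)) by (apply Rmult_le_pos; lra). lra.
Qed.

Lemma mono_from0 : forall (h dh : R -> R) (y : R), 0 <= y -> h 0 = 0 ->
  (forall z, 0 <= z <= y -> is_derive h z (dh z)) ->
  (forall z, 0 <= z <= y -> 0 <= dh z) -> 0 <= h y.
Proof.
  intros h dh y Hy H0 Hd Hp. rewrite <- H0. apply (mono0 h dh); auto.
Qed.

Lemma exp_T2 : forall y, 0 <= y -> 1 + y + y^2/2 <= exp y.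
Proof.
  intros y Hy.
  assert (H := mono_from0 (fun y => exp y - (1 + y + y^2/2)) (fun y => exp y - (1 + y)) y Hy).
  cbv beta in H. rewrite exp_0 in H.
  enough (0 <= exp y - (1 + y + y^2/2)) by lra.
  apply H.
  - field.
  - intros z Hz. auto_derive; auto. field.
  - intros z Hz. pose proof (exp_ineq1_le z). lra.
Qed.

Lemma exp_T3 : forall y, 0 <= y -> 1 + y + y^2/2 + y^3/6 <= exp y.
Proof.
  intros y Hy.
  assert (H := mono_from0 (fun y => exp y - (1 + y + y^2/2 + y^3/6)) (fun y => exp y - (1 + y + y^2/2)) y Hy).
  cbv beta in H. rewrite exp_0 in H.
  enough (0 <= exp y - (1 + y + y^2/2 + y^3/6)) by lra.
  apply H.
  - field.
  - intros z Hz. auto_derive; auto. field.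
  - intros z Hz. pose proof (exp_T2 z (proj1 Hz)). lra.
Qed.

Lemma exp_T4 : forall y, 0 <= y -> 1 + y + y^2/2 + y^3/6 + y^4/24 <= exp y.
Proof.
  intros y Hy.
  assert (H := mono_from0 (fun y => exp y - (1 + y + y^2/2 + y^3/6 + y^4/24)) (fun y => exp y - (1 + y + y^2/2 + y^3/6)) y Hy).
  cbv beta in H. rewrite exp_0 in H.
  enough (0 <= exp y - (1 + y + y^2/2 + y^3/6 + y^4/24)) by lra.
  apply H.
  - field.
  - intros z Hz. auto_derive; auto. field.
  - intros z Hz. pose proof (exp_T3 z (proj1 Hz)). lra.
Qed.

Lemma exp_T5 : forall y, 0 <= y -> 1 + y + y^2/2 + y^3/6 + y^4/24 + y^5/120 <= exp y.
Proof.
  intros y Hy.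
  assert (H := mono_from0 (fun y => exp y - (1 + y + y^2/2 + y^3/6 + y^4/24 + y^5/120)) (fun y => exp y - (1 + y + y^2/2 + y^3/6 + y^4/24)) y Hy).
  cbv beta in H. rewrite exp_0 in H.
  enough (0 <= exp y - (1 + y + y^2/2 + y^3/6 + y^4/24 + y^5/120)) by lra.
  apply H.
  - field.
  - intros z Hz. auto_derive; auto. field.
  - intros z Hz. pose proof (exp_T4 z (proj1 Hz)). lra.
Qed.

Lemma expn_D2 : forall y, 0 <= y -> exp (-y) <= 1 - y + y^2/2.
Proof.
  intros y Hy.
  assert (H := mono_from0 (fun y => 1 - y + y^2/2 - exp (-y)) (fun y => -1 + y + exp (-y)) y Hy).
  cbv beta in H. replace (-0) with 0 in H by ring. rewrite exp_0 in H.
  enough (0 <= 1 - y + y^2/2 - exp (-y)) by lra.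
  apply H.
  - field.
  - intros z Hz. auto_derive; auto. field.
  - intros z Hz. pose proof (exp_ineq1_le (-z)). lra.
Qed.

Lemma expn_D3 : forall y, 0 <= y -> 1 - y + y^2/2 - y^3/6 <= exp (-y).
Proof.
  intros y Hy.
  assert (H := mono_from0 (fun y => exp (-y) - (1 - y + y^2/2 - y^3/6)) (fun y => - exp (-y) + 1 - y + y^2/2) y Hy).
  cbv beta in H. replace (-0) with 0 in H by ring. rewrite exp_0 in H.
  enough (0 <= exp (-y) - (1 - y + y^2/2 - y^3/6)) by lra.
  apply H.
  - field.
  - intros z Hz. auto_derive; auto. field.
  - intros z Hz. pose proof (expn_D2 z (proj1 Hz)). lra.
Qed.
Definition Slo t := 1 - t/6 + t^2/120 - t^3/5040.
Definition Sup t := 1 - t/6 + t^2/120.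
Definition Pc t := 1 - t/2 + t^2/24 - t^3/720 + t^4/40320.
Definition Pclo t := 1 - t/2 + t^2/24 - t^3/720.

Definition ah (t:R) : R := t/6 + t^2/180 + t^3/2000.
Definition cl (t:R) : R := t/3 + 7*t^2/90 + t^3/60.
Definition Alo (t:R) : R := t/6 + t^2/180.
Definition Chi (t:R) : R := t/3 + 7*t^2/90 + t^3/40.
Definition T3f (y:R) : R := 1 + y + y^2/2 + y^3/6.
Definition T4f (y:R) : R := 1 + y + y^2/2 + y^3/6 + y^4/24.
Definition D3f (y:R) : R := 1 - y + y^2/2 - y^3/6.
Definition B4f (z:R) : R := 1 - 4/5*z - 2/25*z^2 - 4/125*z^3 - 11/625*z^4.

Definition I1_p (t:R) : R := ((167/1134000) + t * ((-53/1814400) + t * ((-17/4665600) + t * ((-6773/27216000000) + t * ((-3331/97977600000) + t * ((-607/440899200000) + t * ((-6937/59049000000000) + t * ((-14311/5290790400000000) + t * ((-21631/79361856000000000) + t * ((-28373/17635968000000000000) + t * ((-101/186624000000000000) + t * ((-11/8709120000000000000) + t * (-1/1935360000000000000))))))))))))).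
Lemma I1_0 : forall h, 0 <= h <= (987/400) -> 0 < I1_p ((0) + h).
Proof. intros h Hh. unfold I1_p.
  assert (E: ((167/1134000) + ((0) + h) * ((-53/1814400) + ((0) + h) * ((-17/4665600) + ((0) + h) * ((-6773/27216000000) + ((0) + h) * ((-3331/97977600000) + ((0) + h) * ((-607/440899200000) + ((0) + h) * ((-6937/59049000000000) + ((0) + h) * ((-14311/5290790400000000) + ((0) + h) * ((-21631/79361856000000000) + ((0) + h) * ((-28373/17635968000000000000) + ((0) + h) * ((-101/186624000000000000) + ((0) + h) * ((-11/8709120000000000000) + ((0) + h) * (-1/1935360000000000000))))))))))))) = (167/1134000) * h ^ 0 + (-53/1814400) * h ^ 1 + (-17/4665600) * h ^ 2 + (-6773/27216000000) * h ^ 3 + (-3331/97977600000) * h ^ 4 + (-607/440899200000) * h ^ 5 + (-6937/59049000000000) * h ^ 6 + (-14311/5290790400000000) * h ^ 7 + (-21631/79361856000000000) * h ^ 8 + (-28373/17635968000000000000) * h ^ 9 + (-101/186624000000000000) * h ^ 10 + (-11/8709120000000000000) * h ^ 11 + (-1/1935360000000000000) * h ^ 12) by field. rewrite E. clear E.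
  pose proof (pow_le_up h 1 (987/400) ltac:(lra) ltac:(lra)).
  pose proof (pow_le_up h 2 (987/400) ltac:(lra) ltac:(lra)).
  pose proof (pow_le_up h 3 (987/400) ltac:(lra) ltac:(lra)).
  pose proof (pow_le_up h 4 (987/400) ltac:(lra) ltac:(lra)).
  pose proof (pow_le_up h 5 (987/400) ltac:(lra) ltac:(lra)).
  pose proof (pow_le_up h 6 (987/400) ltac:(lra) ltac:(lra)).
  pose proof (pow_le_up h 7 (987/400) ltac:(lra) ltac:(lra)).
  pose proof (pow_le_up h 8 (987/400) ltac:(lra) ltac:(lra)).
  pose proof (pow_le_up h 9 (987/400) ltac:(lra) ltac:(lra)).
  pose proof (pow_le_up h 10 (987/400) ltac:(lra) ltac:(lra)).
  pose proof (pow_le_up h 11 (987/400) ltac:(lra) ltac:(lra)).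
  pose proof (pow_le_up h 12 (987/400) ltac:(lra) ltac:(lra)).
  lra. Qed.
Lemma I1 : forall t, (0) <= t <= (987/400) -> 0 < I1_p t.
Proof. intros t H.
  replace t with ((0) + (t - (0))) by ring. apply I1_0. lra.
Qed.
Lemma I1_id : forall t, Slo t * T4f (ah t) - 1 = t^3 * I1_p t.
Proof. intros. unfold I1_p, Slo, Sup, Pc, Pclo, ah, cl, Alo, Chi, T3f, T4f, D3f, B4f. field. Qed.
Definition I2_p (t:R) : R := ((59/11340) + t * ((19601/5443200) + t * ((-1793/1360800) + t * ((-14111/61236000) + t * ((-30077/734832000) + t * ((17233/7348320000) + t * ((13079/44089920000) + t * ((283/4898880000) + t * ((-1/233280000) + t * (1/6531840000)))))))))).
Lemma I2_0 : forall h, 0 <= h <= (987/800) -> 0 < I2_p ((0) + h).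
Proof. intros h Hh. unfold I2_p.
  assert (E: ((59/11340) + ((0) + h) * ((19601/5443200) + ((0) + h) * ((-1793/1360800) + ((0) + h) * ((-14111/61236000) + ((0) + h) * ((-30077/734832000) + ((0) + h) * ((17233/7348320000) + ((0) + h) * ((13079/44089920000) + ((0) + h) * ((283/4898880000) + ((0) + h) * ((-1/233280000) + ((0) + h) * (1/6531840000)))))))))) = (59/11340) * h ^ 0 + (19601/5443200) * h ^ 1 + (-1793/1360800) * h ^ 2 + (-14111/61236000) * h ^ 3 + (-30077/734832000) * h ^ 4 + (17233/7348320000) * h ^ 5 + (13079/44089920000) * h ^ 6 + (283/4898880000) * h ^ 7 + (-1/233280000) * h ^ 8 + (1/6531840000) * h ^ 9) by field. rewrite E. clear E.
  pose proof (pow_le h 1 ltac:(lra)).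
  pose proof (pow_le_up h 2 (987/800) ltac:(lra) ltac:(lra)).
  pose proof (pow_le_up h 3 (987/800) ltac:(lra) ltac:(lra)).
  pose proof (pow_le_up h 4 (987/800) ltac:(lra) ltac:(lra)).
  pose proof (pow_le h 5 ltac:(lra)).
  pose proof (pow_le h 6 ltac:(lra)).
  pose proof (pow_le h 7 ltac:(lra)).
  pose proof (pow_le_up h 8 (987/800) ltac:(lra) ltac:(lra)).
  pose proof (pow_le h 9 ltac:(lra)).
  lra. Qed.
Lemma I2_1 : forall h, 0 <= h <= (987/800) -> 0 < I2_p ((987/800) + h).
Proof. intros h Hh. unfold I2_p.
  assert (E: ((59/11340) + ((987/800) + h) * ((19601/5443200) + ((987/800) + h) * ((-1793/1360800) + ((987/800) + h) * ((-14111/61236000) + ((987/800) + h) * ((-30077/734832000) + ((987/800) + h) * ((17233/7348320000) + ((987/800) + h) * ((13079/44089920000) + ((987/800) + h) * ((283/4898880000) + ((987/800) + h) * ((-1/233280000) + ((987/800) + h) * (1/6531840000)))))))))) = (693595605840464992081620398168803/97409858273280000000000000000000000) * h ^ 0 + (-356658021129563462452752307037/365286968524800000000000000000000) * h ^ 1 + (-94628434379888779577682317/38050725888000000000000000000) * h ^ 2 + (-489986193495014920010633/1284211998720000000000000000) * h ^ 3 + (-159247106091442904131/9631589990400000000000000) * h ^ 4 + (72014335212703687/12039487488000000000000) * h ^ 5 + (14379602064901/22574039040000000000) * h ^ 6 + (74769763/3135283200000000) * h ^ 7 + (-1931/746496000000) * h ^ 8 + (1/6531840000) * h ^ 9) by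 field. rewrite E. clear E.
  pose proof (pow_le_up h 1 (987/800) ltac:(lra) ltac:(lra)).
  pose proof (pow_le_up h 2 (987/800) ltac:(lra) ltac:(lra)).
  pose proof (pow_le_up h 3 (987/800) ltac:(lra) ltac:(lra)).
  pose proof (pow_le_up h 4 (987/800) ltac:(lra) ltac:(lra)).
  pose proof (pow_le h 5 ltac:(lra)).
  pose proof (pow_le h 6 ltac:(lra)).
  pose proof (pow_le h 7 ltac:(lra)).
  pose proof (pow_le_up h 8 (987/800) ltac:(lra) ltac:(lra)).
  pose proof (pow_le h 9 ltac:(lra)).
  lra. Qed.
Lemma I2 : forall t, (0) <= t <= (987/400) -> 0 < I2_p t.
Proof. intros t H.
  destruct (Rle_lt_dec t (987/800)) as [H0|H0].
  { replace t with ((0) + (t - (0))) by ring. apply I2_0. lra. }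
  replace t with ((987/800) + (t - (987/800))) by ring. apply I2_1. lra.
Qed.
Lemma I2_id : forall t, Slo t * D3f (cl t) - Pc t = t^3 * I2_p t.
Proof. intros. unfold I2_p, Slo, Sup, Pc, Pclo, ah, cl, Alo, Chi, T3f, T4f, D3f, B4f. field. Qed.
Definition I3_p (t:R) : R := ((8/675) + t * ((749/202500) + t * ((-857/1518750) + t * ((-4169/22781250) + t * ((-1279087/27337500000) + t * ((-2114447/205031250000) + t * ((-4984601/6150937500000) + t * ((-1048127/20503125000000) + t * ((-21451/8542968750000) + t * ((-71/949218750000) + t * (-1/421875000000))))))))))).
Lemma I3_0 : forall h, 0 <= h <= (987/400) -> 0 < I3_p ((0) + h).
Proof. intros h Hh. unfold I3_p.
  assert (E: ((8/675) + ((0) + h) * ((749/202500) + ((0) + h) * ((-857/1518750) + ((0) + h) * ((-4169/22781250) + ((0) + h) * ((-1279087/27337500000) + ((0) + h) * ((-2114447/205031250000) + ((0) + h) * ((-4984601/6150937500000) + ((0) + h) * ((-1048127/20503125000000) + ((0) + h) * ((-21451/8542968750000) + ((0) + h) * ((-71/949218750000) + ((0) + h) * (-1/421875000000))))))))))) = (8/675) * h ^ 0 + (749/202500) * h ^ 1 + (-857/1518750) * h ^ 2 + (-4169/22781250) * h ^ 3 + (-1279087/27337500000) * h ^ 4 + (-2114447/205031250000) * h ^ 5 + (-4984601/6150937500000) * h ^ 6 + (-1048127/20503125000000) * h ^ 7 + (-21451/8542968750000) * h ^ 8 + (-71/949218750000) * h ^ 9 + (-1/421875000000) * h ^ 10)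 by field. rewrite E. clear E.
  pose proof (pow_le h 1 ltac:(lra)).
  pose proof (pow_le_up h 2 (987/400) ltac:(lra) ltac:(lra)).
  pose proof (pow_le_up h 3 (987/400) ltac:(lra) ltac:(lra)).
  pose proof (pow_le_up h 4 (987/400) ltac:(lra) ltac:(lra)).
  pose proof (pow_le_up h 5 (987/400) ltac:(lra) ltac:(lra)).
  pose proof (pow_le_up h 6 (987/400) ltac:(lra) ltac:(lra)).
  pose proof (pow_le_up h 7 (987/400) ltac:(lra) ltac:(lra)).
  pose proof (pow_le_up h 8 (987/400) ltac:(lra) ltac:(lra)).
  pose proof (pow_le_up h 9 (987/400) ltac:(lra) ltac:(lra)).
  pose proof (pow_le_up h 10 (987/400) ltac:(lra) ltac:(lra)).
  lra. Qed.
Lemma I3 : forall t, (0) <= t <= (987/400) -> 0 < I3_p t.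
Proof. intros t H.
  replace t with ((0) + (t - (0))) by ring. apply I3_0. lra.
Qed.
Lemma I3_id : forall t, (5/4 - ah t - 2/5 * (ah t)^2) * (4/5 + 8/25 * cl t + 32/375 * (cl t)^2) - 1 = t^2 * I3_p t.
Proof. intros. unfold I3_p, Slo, Sup, Pc, Pclo, ah, cl, Alo, Chi, T3f, T4f, D3f, B4f. field. Qed.
Definition E1_p (t:R) : R := ((79/67500) + t * ((79/196875) + t * ((-153389/567000000) + t * ((25206067/510300000000) + t * ((-3087989/567000000000) + t * ((42017729/105840000000000) + t * ((-1540833019/71442000000000000) + t * ((5791/6531840000000) + t * ((-7727/274337280000000) + t * ((158777/230443315200000000) + t * ((-11737/921773260800000000) + t * ((209/1229031014400000000) + t * ((-11/7374186086400000000) + t * (11/1651817683353600000000)))))))))))))).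
Lemma E1_0 : forall h, 0 <= h <= (987/800) -> 0 < E1_p ((0) + h).
Proof. intros h Hh. unfold E1_p.
  assert (E: ((79/67500) + ((0) + h) * ((79/196875) + ((0) + h) * ((-153389/567000000) + ((0) + h) * ((25206067/510300000000) + ((0) + h) * ((-3087989/567000000000) + ((0) + h) * ((42017729/105840000000000) + ((0) + h) * ((-1540833019/71442000000000000) + ((0) + h) * ((5791/6531840000000) + ((0) + h) * ((-7727/274337280000000) + ((0) + h) * ((158777/230443315200000000) + ((0) + h) * ((-11737/921773260800000000) + ((0) + h) * ((209/1229031014400000000) + ((0) + h) * ((-11/7374186086400000000) + ((0) + h) * (11/1651817683353600000000)))))))))))))) = (79/67500) * h ^ 0 + (79/196875) * h ^ 1 + (-153389/567000000) * h ^ 2 + (25206067/510300000000) * h ^ 3 + (-3087989/567000000000) * h ^ 4 + (42017729/105840000000000) * h ^ 5 + (-1540833019/71442000000000000) * h ^ 6 + (5791/6531840000000) * h ^ 7 + (-7727/274337280000000) * h ^ 8 + (158777/230443315200000000) * h ^ 9 + (-11737/921773260800000000) * h ^ 10 + (209/1229031014400000000) * h ^ 11 + (-11/7374186086400000000) * h ^ 12 + (11/1651817683353600000000) * h ^ 13) by field. rewrite E. clear E.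
  pose proof (pow_le h 1 ltac:(lra)).
  pose proof (pow_le_up h 2 (987/800) ltac:(lra) ltac:(lra)).
  pose proof (pow_le h 3 ltac:(lra)).
  pose proof (pow_le_up h 4 (987/800) ltac:(lra) ltac:(lra)).
  pose proof (pow_le h 5 ltac:(lra)).
  pose proof (pow_le_up h 6 (987/800) ltac:(lra) ltac:(lra)).
  pose proof (pow_le h 7 ltac:(lra)).
  pose proof (pow_le_up h 8 (987/800) ltac:(lra) ltac:(lra)).
  pose proof (pow_le h 9 ltac:(lra)).
  pose proof (pow_le_up h 10 (987/800) ltac:(lra) ltac:(lra)).
  pose proof (pow_le h 11 ltac:(lra)).
  pose proof (pow_le_up h 12 (987/800) ltac:(lra) ltac:(lra)).
  pose proof (pow_le h 13 ltac:(lra)).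
  lra. Qed.
Lemma E1_1 : forall h, 0 <= h <= (987/800) -> 0 < E1_p ((987/800) + h).
Proof. intros h Hh. unfold E1_p.
  assert (E: ((79/67500) + ((987/800) + h) * ((79/196875) + ((987/800) + h) * ((-153389/567000000) + ((987/800) + h) * ((25206067/510300000000) + ((987/800) + h) * ((-3087989/567000000000) + ((987/800) + h) * ((42017729/105840000000000) + ((987/800) + h) * ((-1540833019/71442000000000000) + ((987/800) + h) * ((5791/6531840000000) + ((987/800) + h) * ((-7727/274337280000000) + ((987/800) + h) * ((158777/230443315200000000) + ((987/800) + h) * ((-11737/921773260800000000) + ((987/800) + h) * ((209/1229031014400000000) + ((987/800) + h) * ((-11/7374186086400000000) + ((987/800) + h) * (11/1651817683353600000000)))))))))))))) = (207763643852447109080984207097427427775385609369219/155644403121924341760000000000000000000000000000000000) * h ^ 0 + (-35118754926963973933609695585690607270223443711/453962842438945996800000000000000000000000000000000) * h ^ 1 + (-333718232268140744369004199836274553123220031/2553540988719071232000000000000000000000000000000) * h ^ 2 + (799136407862744613505246126871844686121971/28727336123089551360000000000000000000000000000) * h ^ 3 + (-783327945095343099741797635042035209/227994731135631360000000000000000000000000) * h ^ 4 + (18357149544310016255895522181581613/69823386410287104000000000000000000000000) * h ^ 5 + (-2947363087349136421917334310203/196378274278932480000000000000000000000) * h ^ 6 + (22569262527533197116905833/35067548978380800000000000000000000) * h ^ 7 + (-78563563904658358609483/3682092642729984000000000000000000) * h ^ 8 + (10545897849316960579/19330986374332416000000000000000) * h ^ 9 + (-638618423098183/60409332419788800000000000000)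 * h ^ 10 + (3744342481/25170555174912000000000000) * h ^ 11 + (-261437/188779163811840000000000) * h ^ 12 + (11/1651817683353600000000) * h ^ 13) by field. rewrite E. clear E.
  pose proof (pow_le_up h 1 (987/800) ltac:(lra) ltac:(lra)).
  pose proof (pow_le_up h 2 (987/800) ltac:(lra) ltac:(lra)).
  pose proof (pow_le h 3 ltac:(lra)).
  pose proof (pow_le_up h 4 (987/800) ltac:(lra) ltac:(lra)).
  pose proof (pow_le h 5 ltac:(lra)).
  pose proof (pow_le_up h 6 (987/800) ltac:(lra) ltac:(lra)).
  pose proof (pow_le h 7 ltac:(lra)).
  pose proof (pow_le_up h 8 (987/800) ltac:(lra) ltac:(lra)).
  pose proof (pow_le h 9 ltac:(lra)).
  pose proof (pow_le_up h 10 (987/800) ltac:(lra) ltac:(lra)).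
  pose proof (pow_le h 11 ltac:(lra)).
  pose proof (pow_le_up h 12 (987/800) ltac:(lra) ltac:(lra)).
  pose proof (pow_le h 13 ltac:(lra)).
  lra. Qed.
Lemma E1 : forall t, (0) <= t <= (987/400) -> 0 < E1_p t.
Proof. intros t H.
  destruct (Rle_lt_dec t (987/800)) as [H0|H0].
  { replace t with ((0) + (t - (0))) by ring. apply E1_0. lra. }
  replace t with ((987/800) + (t - (987/800))) by ring. apply E1_1. lra.
Qed.
Lemma E1_id : forall t, 3 * D3f (4/5 * ah t) - 2 - B4f (1 - Pc t) = t^3 * E1_p t.
Proof. intros. unfold E1_p, Slo, Sup, Pc, Pclo, ah, cl, Alo, Chi, T3f, T4f, D3f, B4f. field. Qed.
Definition Zq_p (z:R) : R := ((176/3125) + z * ((-88/625) + z * ((1584/15625) + z * ((-902/78125) + z * ((-1144/390625) + z * ((1188/9765625) + z * ((-17656/9765625) + z * ((-23102/48828125) + z * ((-42192/244140625) + z * ((-84728/1220703125) + z * ((-426064/30517578125) + z * ((-107239/30517578125) + z * ((-116644/152587890625) + z * ((-71874/762939453125) + z * ((-58564/3814697265625) + z * (-161051/95367431640625)))))))))))))))).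
Lemma Zq_0 : forall h, 0 <= h <= (1/4) -> 0 < Zq_p ((0) + h).
Proof. intros h Hh. unfold Zq_p.
  assert (E: ((176/3125) + ((0) + h) * ((-88/625) + ((0) + h) * ((1584/15625) + ((0) + h) * ((-902/78125) + ((0) + h) * ((-1144/390625) + ((0) + h) * ((1188/9765625) + ((0) + h) * ((-17656/9765625) + ((0) + h) * ((-23102/48828125) + ((0) + h) * ((-42192/244140625) + ((0) + h) * ((-84728/1220703125) + ((0) + h) * ((-426064/30517578125) + ((0) + h) * ((-107239/30517578125) + ((0) + h) * ((-116644/152587890625) + ((0) + h) * ((-71874/762939453125) + ((0) + h) * ((-58564/3814697265625) + ((0) + h) * (-161051/95367431640625)))))))))))))))) = (176/3125) * h ^ 0 + (-88/625) * h ^ 1 + (1584/15625) * h ^ 2 + (-902/78125) * h ^ 3 + (-1144/390625) * h ^ 4 + (1188/9765625) * h ^ 5 + (-17656/9765625) * h ^ 6 + (-23102/48828125) * h ^ 7 + (-42192/244140625) * h ^ 8 + (-84728/1220703125) * h ^ 9 + (-426064/30517578125) * h ^ 10 + (-107239/30517578125) * h ^ 11 + (-116644/152587890625) * h ^ 12 + (-71874/762939453125) * h ^ 13 + (-58564/3814697265625) * h ^ 14 + (-161051/95367431640625) * h ^ 15) by field. rewrite E. clear E.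
  pose proof (pow_le_up h 1 (1/4) ltac:(lra) ltac:(lra)).
  pose proof (pow_le h 2 ltac:(lra)).
  pose proof (pow_le_up h 3 (1/4) ltac:(lra) ltac:(lra)).
  pose proof (pow_le_up h 4 (1/4) ltac:(lra) ltac:(lra)).
  pose proof (pow_le h 5 ltac:(lra)).
  pose proof (pow_le_up h 6 (1/4) ltac:(lra) ltac:(lra)).
  pose proof (pow_le_up h 7 (1/4) ltac:(lra) ltac:(lra)).
  pose proof (pow_le_up h 8 (1/4) ltac:(lra) ltac:(lra)).
  pose proof (pow_le_up h 9 (1/4) ltac:(lra) ltac:(lra)).
  pose proof (pow_le_up h 10 (1/4) ltac:(lra) ltac:(lra)).
  pose proof (pow_le_up h 11 (1/4) ltac:(lra) ltac:(lra)).
  pose proof (pow_le_up h 12 (1/4) ltac:(lra) ltac:(lra)).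
  pose proof (pow_le_up h 13 (1/4) ltac:(lra) ltac:(lra)).
  pose proof (pow_le_up h 14 (1/4) ltac:(lra) ltac:(lra)).
  pose proof (pow_le_up h 15 (1/4) ltac:(lra) ltac:(lra)).
  lra. Qed.
Lemma Zq_1 : forall h, 0 <= h <= (1/4) -> 0 < Zq_p ((1/4) + h).
Proof. intros h Hh. unfold Zq_p.
  assert (E: ((176/3125) + ((1/4) + h) * ((-88/625) + ((1/4) + h) * ((1584/15625) + ((1/4) + h) * ((-902/78125) + ((1/4) + h) * ((-1144/390625) + ((1/4) + h) * ((1188/9765625) + ((1/4) + h) * ((-17656/9765625) + ((1/4) + h) * ((-23102/48828125) + ((1/4) + h) * ((-42192/244140625) + ((1/4) + h) * ((-84728/1220703125) + ((1/4) + h) * ((-426064/30517578125) + ((1/4) + h) * ((-107239/30517578125) + ((1/4) + h) * ((-116644/152587890625) + ((1/4) + h) * ((-71874/762939453125) + ((1/4) + h) * ((-58564/3814697265625) + ((1/4) + h) * (-161051/95367431640625)))))))))))))))) = (2791813694108228474549/102400000000000000000000) * h ^ 0 + (-473441078566946689873/5120000000000000000000) * h ^ 1 + (117146348671921130649/1280000000000000000000) * h ^ 2 + (-4812438979069627161/320000000000000000000) * h ^ 3 + (-382950610695422203/80000000000000000000) * h ^ 4 + (-340054167797744953/100000000000000000000) * h ^ 5 + (-15213514761807491/5000000000000000000) * h ^ 6 + (-1257847144203197/1250000000000000000) * h ^ 7 + (-118413476401677/312500000000000000) * h ^ 8 + (-9321460318611/78125000000000000) * h ^ 9 + (-2662505980553/97656250000000000)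 * h ^ 10 + (-31068845643/4882812500000000) * h ^ 11 + (-1428138921/1220703125000000) * h ^ 12 + (-48529591/305175781250000) * h ^ 13 + (-1654433/76293945312500) * h ^ 14 + (-161051/95367431640625) * h ^ 15) by field. rewrite E. clear E.
  pose proof (pow_le_up h 1 (1/4) ltac:(lra) ltac:(lra)).
  pose proof (pow_le h 2 ltac:(lra)).
  pose proof (pow_le_up h 3 (1/4) ltac:(lra) ltac:(lra)).
  pose proof (pow_le_up h 4 (1/4) ltac:(lra) ltac:(lra)).
  pose proof (pow_le_up h 5 (1/4) ltac:(lra) ltac:(lra)).
  pose proof (pow_le_up h 6 (1/4) ltac:(lra) ltac:(lra)).
  pose proof (pow_le_up h 7 (1/4) ltac:(lra) ltac:(lra)).
  pose proof (pow_le_up h 8 (1/4) ltac:(lra) ltac:(lra)).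
  pose proof (pow_le_up h 9 (1/4) ltac:(lra) ltac:(lra)).
  pose proof (pow_le_up h 10 (1/4) ltac:(lra) ltac:(lra)).
  pose proof (pow_le_up h 11 (1/4) ltac:(lra) ltac:(lra)).
  pose proof (pow_le_up h 12 (1/4) ltac:(lra) ltac:(lra)).
  pose proof (pow_le_up h 13 (1/4) ltac:(lra) ltac:(lra)).
  pose proof (pow_le_up h 14 (1/4) ltac:(lra) ltac:(lra)).
  pose proof (pow_le_up h 15 (1/4) ltac:(lra) ltac:(lra)).
  lra. Qed.
Lemma Zq_2 : forall h, 0 <= h <= (1/8) -> 0 < Zq_p ((1/2) + h).
Proof. intros h Hh. unfold Zq_p.
  assert (E: ((176/3125) + ((1/2) + h) * ((-88/625) + ((1/2) + h) * ((1584/15625) + ((1/2) + h) * ((-902/78125) + ((1/2) + h) * ((-1144/390625) + ((1/2) + h) * ((1188/9765625) + ((1/2) + h) * ((-17656/9765625) + ((1/2) + h) * ((-23102/48828125) + ((1/2) + h) * ((-42192/244140625) + ((1/2) + h) * ((-84728/1220703125) + ((1/2) + h) * ((-426064/30517578125) + ((1/2) + h) * ((-107239/30517578125) + ((1/2) + h) * ((-116644/152587890625) + ((1/2) + h) * ((-71874/762939453125) + ((1/2) + h) * ((-58564/3814697265625) + ((1/2) + h) * (-161051/95367431640625)))))))))))))))) = (30027467169403749/3125000000000000000) * h ^ 0 + (-15598063822936313/312500000000000000) * h ^ 1 + (12142691077153489/156250000000000000) * h ^ 2 + (-1801789115055001/78125000000000000) * h ^ 3 + (-490633993463563/39062500000000000)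 * h ^ 4 + (-945615780751553/97656250000000000) * h ^ 5 + (-55165257503371/9765625000000000) * h ^ 6 + (-10219143115517/4882812500000000) * h ^ 7 + (-1813828863357/2441406250000000) * h ^ 8 + (-261056584331/1220703125000000) * h ^ 9 + (-153773116353/3051757812500000) * h ^ 10 + (-3289875083/305175781250000) * h ^ 11 + (-278029081/152587890625000) * h ^ 12 + (-18768431/76293945312500) * h ^ 13 + (-1068793/38146972656250) * h ^ 14 + (-161051/95367431640625) * h ^ 15) by field. rewrite E. clear E.
  pose proof (pow_le_up h 1 (1/8) ltac:(lra) ltac:(lra)).
  pose proof (pow_le h 2 ltac:(lra)).
  pose proof (pow_le_up h 3 (1/8) ltac:(lra) ltac:(lra)).
  pose proof (pow_le_up h 4 (1/8) ltac:(lra) ltac:(lra)).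
  pose proof (pow_le_up h 5 (1/8) ltac:(lra) ltac:(lra)).
  pose proof (pow_le_up h 6 (1/8) ltac:(lra) ltac:(lra)).
  pose proof (pow_le_up h 7 (1/8) ltac:(lra) ltac:(lra)).
  pose proof (pow_le_up h 8 (1/8) ltac:(lra) ltac:(lra)).
  pose proof (pow_le_up h 9 (1/8) ltac:(lra) ltac:(lra)).
  pose proof (pow_le_up h 10 (1/8) ltac:(lra) ltac:(lra)).
  pose proof (pow_le_up h 11 (1/8) ltac:(lra) ltac:(lra)).
  pose proof (pow_le_up h 12 (1/8) ltac:(lra) ltac:(lra)).
  pose proof (pow_le_up h 13 (1/8) ltac:(lra) ltac:(lra)).
  pose proof (pow_le_up h 14 (1/8) ltac:(lra) ltac:(lra)).
  pose proof (pow_le_up h 15 (1/8) ltac:(lra) ltac:(lra)).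
  lra. Qed.
Lemma Zq_3 : forall h, 0 <= h <= (1/8) -> 0 < Zq_p ((5/8) + h).
Proof. intros h Hh. unfold Zq_p.
  assert (E: ((176/3125) + ((5/8) + h) * ((-88/625) + ((5/8) + h) * ((1584/15625) + ((5/8) + h) * ((-902/78125) + ((5/8) + h) * ((-1144/390625) + ((5/8) + h) * ((1188/9765625) + ((5/8) + h) * ((-17656/9765625) + ((5/8) + h) * ((-23102/48828125) + ((5/8) + h) * ((-42192/244140625) + ((5/8) + h) * ((-84728/1220703125) + ((5/8) + h) * ((-426064/30517578125) + ((5/8) + h) * ((-107239/30517578125) + ((5/8) + h) * ((-116644/152587890625) + ((5/8) + h) * ((-71874/762939453125) + ((5/8) + h) * ((-58564/3814697265625) + ((5/8) + h) * (-161051/95367431640625)))))))))))))))) = (498672919790021/109951162777600000) * h ^ 0 + (-435373786405777/13743895347200000) * h ^ 1 + (581331374076009/8589934592000000) * h ^ 2 + (-33388954177797/1073741824000000) * h ^ 3 + (-67420137259627/3355443200000000) * h ^ 4 + (-6163432907617/419430400000000) * h ^ 5 + (-10280054241779/1310720000000000) * h ^ 6 + (-2432076747197/819200000000000) * h ^ 7 + (-104721169593/102400000000000) * h ^ 8 + (-91819176531/320000000000000) * h ^ 9 + (-13446936901/200000000000000) * h ^ 10 + (-1729211979/125000000000000) * h ^ 11 + (-176811129/78125000000000) * h ^ 12 + (-581647/1953125000000) * h ^ 13 + (-190333/6103515625000) * h ^ 14 + (-161051/95367431640625) * h ^ 15) by field. rewrite E. clear E.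
  pose proof (pow_le_up h 1 (1/8) ltac:(lra) ltac:(lra)).
  pose proof (pow_le h 2 ltac:(lra)).
  pose proof (pow_le_up h 3 (1/8) ltac:(lra) ltac:(lra)).
  pose proof (pow_le_up h 4 (1/8) ltac:(lra) ltac:(lra)).
  pose proof (pow_le_up h 5 (1/8) ltac:(lra) ltac:(lra)).
  pose proof (pow_le_up h 6 (1/8) ltac:(lra) ltac:(lra)).
  pose proof (pow_le_up h 7 (1/8) ltac:(lra) ltac:(lra)).
  pose proof (pow_le_up h 8 (1/8) ltac:(lra) ltac:(lra)).
  pose proof (pow_le_up h 9 (1/8) ltac:(lra) ltac:(lra)).
  pose proof (pow_le_up h 10 (1/8) ltac:(lra) ltac:(lra)).
  pose proof (pow_le_up h 11 (1/8) ltac:(lra) ltac:(lra)).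
  pose proof (pow_le_up h 12 (1/8) ltac:(lra) ltac:(lra)).
  pose proof (pow_le_up h 13 (1/8) ltac:(lra) ltac:(lra)).
  pose proof (pow_le_up h 14 (1/8) ltac:(lra) ltac:(lra)).
  pose proof (pow_le_up h 15 (1/8) ltac:(lra) ltac:(lra)).
  lra. Qed.
Lemma Zq_4 : forall h, 0 <= h <= (1/16) -> 0 < Zq_p ((3/4) + h).
Proof. intros h Hh. unfold Zq_p.
  assert (E: ((176/3125) + ((3/4) + h) * ((-88/625) + ((3/4) + h) * ((1584/15625) + ((3/4) + h) * ((-902/78125) + ((3/4) + h) * ((-1144/390625) + ((3/4) + h) * ((1188/9765625) + ((3/4) + h) * ((-17656/9765625) + ((3/4) + h) * ((-23102/48828125) + ((3/4) + h) * ((-42192/244140625) + ((3/4) + h) * ((-84728/1220703125) + ((3/4) + h) * ((-426064/30517578125) + ((3/4) + h) * ((-107239/30517578125) + ((3/4) + h) * ((-116644/152587890625) + ((3/4) + h) * ((-71874/762939453125) + ((3/4) + h) * ((-58564/3814697265625) + ((3/4) + h) * (-161051/95367431640625)))))))))))))))) = (160462685476990163143/102400000000000000000000) * h ^ 0 + (-83930594499701374217/5120000000000000000000) * h ^ 1 + (68881252164954017787/1280000000000000000000) * h ^ 2 + (-14007011027956013321/320000000000000000000) * h ^ 3 + (-2506943943420993401/80000000000000000000) * h ^ 4 + (-2167243842764316897/100000000000000000000) * h ^ 5 + (-54694699571219273/5000000000000000000) * h ^ 6 + (-5212302019981277/1250000000000000000) * h ^ 7 + (-436714856300079/312500000000000000)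 * h ^ 8 + (-29991640471259/78125000000000000) * h ^ 9 + (-8668364249579/97656250000000000) * h ^ 10 + (-86006591803/4882812500000000) * h ^ 11 + (-3409367027/1220703125000000) * h ^ 12 + (-108381999/305175781250000) * h ^ 13 + (-2620739/76293945312500) * h ^ 14 + (-161051/95367431640625) * h ^ 15) by field. rewrite E. clear E.
  pose proof (pow_le_up h 1 (1/16) ltac:(lra) ltac:(lra)).
  pose proof (pow_le h 2 ltac:(lra)).
  pose proof (pow_le_up h 3 (1/16) ltac:(lra) ltac:(lra)).
  pose proof (pow_le_up h 4 (1/16) ltac:(lra) ltac:(lra)).
  pose proof (pow_le_up h 5 (1/16) ltac:(lra) ltac:(lra)).
  pose proof (pow_le_up h 6 (1/16) ltac:(lra) ltac:(lra)).
  pose proof (pow_le_up h 7 (1/16) ltac:(lra) ltac:(lra)).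
  pose proof (pow_le_up h 8 (1/16) ltac:(lra) ltac:(lra)).
  pose proof (pow_le_up h 9 (1/16) ltac:(lra) ltac:(lra)).
  pose proof (pow_le_up h 10 (1/16) ltac:(lra) ltac:(lra)).
  pose proof (pow_le_up h 11 (1/16) ltac:(lra) ltac:(lra)).
  pose proof (pow_le_up h 12 (1/16) ltac:(lra) ltac:(lra)).
  pose proof (pow_le_up h 13 (1/16) ltac:(lra) ltac:(lra)).
  pose proof (pow_le_up h 14 (1/16) ltac:(lra) ltac:(lra)).
  pose proof (pow_le_up h 15 (1/16) ltac:(lra) ltac:(lra)).
  lra. Qed.
Lemma Zq_5 : forall h, 0 <= h <= (1/16) -> 0 < Zq_p ((13/16) + h).
Proof. intros h Hh. unfold Zq_p.
  assert (E: ((176/3125) + ((13/16) + h) * ((-88/625) + ((13/16) + h) * ((1584/15625) + ((13/16) + h) * ((-902/78125) + ((13/16) + h) * ((-1144/390625) + ((13/16) + h) * ((1188/9765625) + ((13/16) + h) * ((-17656/9765625) + ((13/16) + h) * ((-23102/48828125) + ((13/16) + h) * ((-42192/244140625) + ((13/16) + h) * ((-84728/1220703125) + ((13/16) + h) * ((-426064/30517578125) + ((13/16) + h) * ((-107239/30517578125) + ((13/16) + h) * ((-116644/152587890625) + ((13/16) + h) * ((-71874/762939453125) + ((13/16) + h) * ((-58564/3814697265625) + ((13/16) + h) * (-161051/95367431640625)))))))))))))))) = (81528558845664951922090151993/109951162777600000000000000000000) * h ^ 0 + (-14034278724855378985066006057/1374389534720000000000000000000) * h ^ 1 + (3849689838659895946667794917/85899345920000000000000000000)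 * h ^ 2 + (-281902354068162482034151881/5368709120000000000000000000) * h ^ 3 + (-13014945687368380276617031/335544320000000000000000000) * h ^ 4 + (-2740606928602651694210497/104857600000000000000000000) * h ^ 5 + (-16940087344017610805783/1310720000000000000000000) * h ^ 6 + (-403477437546376868957/81920000000000000000000) * h ^ 7 + (-8344378875551993169/5120000000000000000000) * h ^ 8 + (-141858807091899579/320000000000000000000) * h ^ 9 + (-10161916366733429/100000000000000000000) * h ^ 10 + (-24775201875963/1250000000000000000) * h ^ 11 + (-241711550157/78125000000000000) * h ^ 12 + (-1884255439/4882812500000000) * h ^ 13 + (-10966109/305175781250000) * h ^ 14 + (-161051/95367431640625) * h ^ 15) by field. rewrite E. clear E.
  pose proof (pow_le_up h 1 (1/16) ltac:(lra) ltac:(lra)).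
  pose proof (pow_le h 2 ltac:(lra)).
  pose proof (pow_le_up h 3 (1/16) ltac:(lra) ltac:(lra)).
  pose proof (pow_le_up h 4 (1/16) ltac:(lra) ltac:(lra)).
  pose proof (pow_le_up h 5 (1/16) ltac:(lra) ltac:(lra)).
  pose proof (pow_le_up h 6 (1/16) ltac:(lra) ltac:(lra)).
  pose proof (pow_le_up h 7 (1/16) ltac:(lra) ltac:(lra)).
  pose proof (pow_le_up h 8 (1/16) ltac:(lra) ltac:(lra)).
  pose proof (pow_le_up h 9 (1/16) ltac:(lra) ltac:(lra)).
  pose proof (pow_le_up h 10 (1/16) ltac:(lra) ltac:(lra)).
  pose proof (pow_le_up h 11 (1/16) ltac:(lra) ltac:(lra)).
  pose proof (pow_le_up h 12 (1/16) ltac:(lra) ltac:(lra)).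
  pose proof (pow_le_up h 13 (1/16) ltac:(lra) ltac:(lra)).
  pose proof (pow_le_up h 14 (1/16) ltac:(lra) ltac:(lra)).
  pose proof (pow_le_up h 15 (1/16) ltac:(lra) ltac:(lra)).
  lra. Qed.
Lemma Zq_6 : forall h, 0 <= h <= (1/32) -> 0 < Zq_p ((7/8) + h).
Proof. intros h Hh. unfold Zq_p.
  assert (E: ((176/3125) + ((7/8) + h) * ((-88/625) + ((7/8) + h) * ((1584/15625) + ((7/8) + h) * ((-902/78125) + ((7/8) + h) * ((-1144/390625) + ((7/8) + h) * ((1188/9765625) + ((7/8) + h) * ((-17656/9765625) + ((7/8) + h) * ((-23102/48828125) + ((7/8) + h) * ((-42192/244140625) + ((7/8) + h) * ((-84728/1220703125) + ((7/8) + h) * ((-426064/30517578125) + ((7/8) + h) * ((-107239/30517578125) + ((7/8) + h) * ((-116644/152587890625) + ((7/8) + h) * ((-71874/762939453125) + ((7/8) + h) * ((-58564/3814697265625) + ((7/8) + h) * (-161051/95367431640625)))))))))))))))) = (888922135886105240578707/3355443200000000000000000000) * h ^ 0 + (-441620546407265453754977/83886080000000000000000000) * h ^ 1 + (356463510167881179484543/10485760000000000000000000) * h ^ 2 + (-82958191792338923125561/1310720000000000000000000) * h ^ 3 + (-7824403345836772971229/163840000000000000000000) * h ^ 4 + (-3216409273439673800297/102400000000000000000000) * h ^ 5 + (-39082864508578204837/2560000000000000000000) * h ^ 6 + (-1857779852040214397/320000000000000000000) * h ^ 7 + (-75912307815482811/40000000000000000000) * h ^ 8 + (-2556247216055939/5000000000000000000)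 * h ^ 9 + (-362720847992271/3125000000000000000) * h ^ 10 + (-1739171752043/78125000000000000) * h ^ 11 + (-33402430303/9765625000000000) * h ^ 12 + (-510290759/1220703125000000) * h ^ 13 + (-5724631/152587890625000) * h ^ 14 + (-161051/95367431640625) * h ^ 15) by field. rewrite E. clear E.
  pose proof (pow_le_up h 1 (1/32) ltac:(lra) ltac:(lra)).
  pose proof (pow_le h 2 ltac:(lra)).
  pose proof (pow_le_up h 3 (1/32) ltac:(lra) ltac:(lra)).
  pose proof (pow_le_up h 4 (1/32) ltac:(lra) ltac:(lra)).
  pose proof (pow_le_up h 5 (1/32) ltac:(lra) ltac:(lra)).
  pose proof (pow_le_up h 6 (1/32) ltac:(lra) ltac:(lra)).
  pose proof (pow_le_up h 7 (1/32) ltac:(lra) ltac:(lra)).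
  pose proof (pow_le_up h 8 (1/32) ltac:(lra) ltac:(lra)).
  pose proof (pow_le_up h 9 (1/32) ltac:(lra) ltac:(lra)).
  pose proof (pow_le_up h 10 (1/32) ltac:(lra) ltac:(lra)).
  pose proof (pow_le_up h 11 (1/32) ltac:(lra) ltac:(lra)).
  pose proof (pow_le_up h 12 (1/32) ltac:(lra) ltac:(lra)).
  pose proof (pow_le_up h 13 (1/32) ltac:(lra) ltac:(lra)).
  pose proof (pow_le_up h 14 (1/32) ltac:(lra) ltac:(lra)).
  pose proof (pow_le_up h 15 (1/32) ltac:(lra) ltac:(lra)).
  lra. Qed.
Lemma Zq_7 : forall h, 0 <= h <= (1/32) -> 0 < Zq_p ((29/32) + h).
Proof. intros h Hh. unfold Zq_p.
  assert (E: ((176/3125) + ((29/32) + h) * ((-88/625) + ((29/32) + h) * ((1584/15625) + ((29/32) + h) * ((-902/78125) + ((29/32) + h) * ((-1144/390625) + ((29/32) + h) * ((1188/9765625) + ((29/32) + h) * ((-17656/9765625) + ((29/32) + h) * ((-23102/48828125) + ((29/32) + h) * ((-42192/244140625) + ((29/32) + h) * ((-84728/1220703125) + ((29/32) + h) * ((-426064/30517578125) + ((29/32) + h) * ((-107239/30517578125) + ((29/32) + h) * ((-116644/152587890625) + ((29/32) + h) * ((-71874/762939453125) + ((29/32) + h) * ((-58564/3814697265625) + ((29/32) + h) * (-161051/95367431640625)))))))))))))))) = (474222566299505946691727538767401/3602879701896396800000000000000000000) * h ^ 0 + (-75013019501084361989549004557833/22517998136852480000000000000000000) * h ^ 1 +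 (19542629588101112957226930484341/703687441776640000000000000000000) * h ^ 2 + (-1530033745422471083323129130121/21990232555520000000000000000000) * h ^ 3 + (-36348605596306744399525056407/687194767360000000000000000000) * h ^ 4 + (-3693148566870178472112416353/107374182400000000000000000000) * h ^ 5 + (-11133318899679908301128839/671088640000000000000000000) * h ^ 6 + (-132087435242770794195677/20971520000000000000000000) * h ^ 7 + (-1341398115337330425153/655360000000000000000000) * h ^ 8 + (-11238204621871068891/20480000000000000000000) * h ^ 9 + (-396630936484164997/3200000000000000000000) * h ^ 10 + (-471526256892603/20000000000000000000) * h ^ 11 + (-2245994438589/625000000000000000) * h ^ 12 + (-8488613551/19531250000000000) * h ^ 13 + (-23381677/610351562500000) * h ^ 14 + (-161051/95367431640625) * h ^ 15) by field. rewrite E. clear E.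
  pose proof (pow_le_up h 1 (1/32) ltac:(lra) ltac:(lra)).
  pose proof (pow_le h 2 ltac:(lra)).
  pose proof (pow_le_up h 3 (1/32) ltac:(lra) ltac:(lra)).
  pose proof (pow_le_up h 4 (1/32) ltac:(lra) ltac:(lra)).
  pose proof (pow_le_up h 5 (1/32) ltac:(lra) ltac:(lra)).
  pose proof (pow_le_up h 6 (1/32) ltac:(lra) ltac:(lra)).
  pose proof (pow_le_up h 7 (1/32) ltac:(lra) ltac:(lra)).
  pose proof (pow_le_up h 8 (1/32) ltac:(lra) ltac:(lra)).
  pose proof (pow_le_up h 9 (1/32) ltac:(lra) ltac:(lra)).
  pose proof (pow_le_up h 10 (1/32) ltac:(lra) ltac:(lra)).
  pose proof (pow_le_up h 11 (1/32) ltac:(lra) ltac:(lra)).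
  pose proof (pow_le_up h 12 (1/32) ltac:(lra) ltac:(lra)).
  pose proof (pow_le_up h 13 (1/32) ltac:(lra) ltac:(lra)).
  pose proof (pow_le_up h 14 (1/32) ltac:(lra) ltac:(lra)).
  pose proof (pow_le_up h 15 (1/32) ltac:(lra) ltac:(lra)).
  lra. Qed.
Lemma Zq_8 : forall h, 0 <= h <= (1/64) -> 0 < Zq_p ((15/16) + h).
Proof. intros h Hh. unfold Zq_p.
  assert (E: ((176/3125) + ((15/16) + h) * ((-88/625) + ((15/16) + h) * ((1584/15625) + ((15/16) + h) * ((-902/78125) + ((15/16) + h) * ((-1144/390625) + ((15/16) + h) * ((1188/9765625) + ((15/16) + h) * ((-17656/9765625) + ((15/16) + h) * ((-23102/48828125) + ((15/16) + h) * ((-42192/244140625) + ((15/16) + h) * ((-84728/1220703125) + ((15/16) + h) * ((-426064/30517578125) + ((15/16) + h) * ((-107239/30517578125) + ((15/16) + h) * ((-116644/152587890625) + ((15/16) + h) * ((-71874/762939453125) + ((15/16) + h) * ((-58564/3814697265625) + ((15/16) + h) * (-161051/95367431640625)))))))))))))))) = (189034955497133687/3602879701896396800000) * h ^ 0 + (-81334033734920437/45035996273704960000) * h ^ 1 + (1472688060953516523/70368744177664000000) * h ^ 2 + (-1683041830451566601/21990232555520000000) * h ^ 3 + (-402134723376026953/6871947673600000000) * h ^ 4 + (-404140008715144353/10737418240000000000) * h ^ 5 + (-2419290196246277/134217728000000000) * h ^ 6 + (-1432328720714717/209715200000000000) * h ^ 7 + (-144619055995743/65536000000000000) * h ^ 8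 + (-482316026963/819200000000000) * h ^ 9 + (-4233183150043/32000000000000000) * h ^ 10 + (-49914885691/2000000000000000) * h ^ 11 + (-2358488803/625000000000000) * h ^ 12 + (-88193391/195312500000000) * h ^ 13 + (-2386483/61035156250000) * h ^ 14 + (-161051/95367431640625) * h ^ 15) by field. rewrite E. clear E.
  pose proof (pow_le_up h 1 (1/64) ltac:(lra) ltac:(lra)).
  pose proof (pow_le h 2 ltac:(lra)).
  pose proof (pow_le_up h 3 (1/64) ltac:(lra) ltac:(lra)).
  pose proof (pow_le_up h 4 (1/64) ltac:(lra) ltac:(lra)).
  pose proof (pow_le_up h 5 (1/64) ltac:(lra) ltac:(lra)).
  pose proof (pow_le_up h 6 (1/64) ltac:(lra) ltac:(lra)).
  pose proof (pow_le_up h 7 (1/64) ltac:(lra) ltac:(lra)).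
  pose proof (pow_le_up h 8 (1/64) ltac:(lra) ltac:(lra)).
  pose proof (pow_le_up h 9 (1/64) ltac:(lra) ltac:(lra)).
  pose proof (pow_le_up h 10 (1/64) ltac:(lra) ltac:(lra)).
  pose proof (pow_le_up h 11 (1/64) ltac:(lra) ltac:(lra)).
  pose proof (pow_le_up h 12 (1/64) ltac:(lra) ltac:(lra)).
  pose proof (pow_le_up h 13 (1/64) ltac:(lra) ltac:(lra)).
  pose proof (pow_le_up h 14 (1/64) ltac:(lra) ltac:(lra)).
  pose proof (pow_le_up h 15 (1/64) ltac:(lra) ltac:(lra)).
  lra. Qed.
Lemma Zq_9 : forall h, 0 <= h <= (1/64) -> 0 < Zq_p ((61/64) + h).
Proof. intros h Hh. unfold Zq_p.
  assert (E: ((176/3125) + ((61/64) + h) * ((-88/625) + ((61/64) + h) * ((1584/15625) + ((61/64) + h) * ((-902/78125) + ((61/64) + h) * ((-1144/390625) + ((61/64) + h) * ((1188/9765625) + ((61/64) + h) * ((-17656/9765625) + ((61/64) + h) * ((-23102/48828125) + ((61/64) + h) * ((-42192/244140625) + ((61/64) + h) * ((-84728/1220703125) + ((61/64) + h) * ((-426064/30517578125) + ((61/64) + h) * ((-107239/30517578125) + ((61/64) + h) * ((-116644/152587890625) + ((61/64) + h) * ((-71874/762939453125) + ((61/64) + h) * ((-58564/3814697265625) + ((61/64) + h) * (-161051/95367431640625)))))))))))))))) = (3431183777525039522973642939931888649/118059162071741130342400000000000000000000) * h ^ 0 + (-446018015039970400286366235210779593/368934881474191032320000000000000000000) * h ^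 1 + (99458874329285768255393249492235669/5764607523034234880000000000000000000) * h ^ 2 + (-7231570051753769441890509990262281/90071992547409920000000000000000000) * h ^ 3 + (-86589782202396928512882655062583/1407374883553280000000000000000000) * h ^ 4 + (-4328097596992459838970593806753/109951162777600000000000000000000) * h ^ 5 + (-6455304752030476007446659431/343597383680000000000000000000) * h ^ 6 + (-38176623545822205122056157/5368709120000000000000000000) * h ^ 7 + (-192180985275682877808417/83886080000000000000000000) * h ^ 8 + (-799241442554475097371/1310720000000000000000000) * h ^ 9 + (-13991714170648556453/102400000000000000000000) * h ^ 10 + (-8215565687010363/320000000000000000000) * h ^ 11 + (-19330874111901/5000000000000000000) * h ^ 12 + (-35948953711/78125000000000000) * h ^ 13 + (-48212813/1220703125000000) * h ^ 14 + (-161051/95367431640625) * h ^ 15) by field. rewrite E. clear E.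
  pose proof (pow_le_up h 1 (1/64) ltac:(lra) ltac:(lra)).
  pose proof (pow_le h 2 ltac:(lra)).
  pose proof (pow_le_up h 3 (1/64) ltac:(lra) ltac:(lra)).
  pose proof (pow_le_up h 4 (1/64) ltac:(lra) ltac:(lra)).
  pose proof (pow_le_up h 5 (1/64) ltac:(lra) ltac:(lra)).
  pose proof (pow_le_up h 6 (1/64) ltac:(lra) ltac:(lra)).
  pose proof (pow_le_up h 7 (1/64) ltac:(lra) ltac:(lra)).
  pose proof (pow_le_up h 8 (1/64) ltac:(lra) ltac:(lra)).
  pose proof (pow_le_up h 9 (1/64) ltac:(lra) ltac:(lra)).
  pose proof (pow_le_up h 10 (1/64) ltac:(lra) ltac:(lra)).
  pose proof (pow_le_up h 11 (1/64) ltac:(lra) ltac:(lra)).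
  pose proof (pow_le_up h 12 (1/64) ltac:(lra) ltac:(lra)).
  pose proof (pow_le_up h 13 (1/64) ltac:(lra) ltac:(lra)).
  pose proof (pow_le_up h 14 (1/64) ltac:(lra) ltac:(lra)).
  pose proof (pow_le_up h 15 (1/64) ltac:(lra) ltac:(lra)).
  lra. Qed.
Lemma Zq_10 : forall h, 0 <= h <= (1/64) -> 0 < Zq_p ((31/32) + h).
Proof. intros h Hh. unfold Zq_p.
  assert (E: ((176/3125) + ((31/32) + h) * ((-88/625) + ((31/32) + h) * ((1584/15625) + ((31/32) + h) * ((-902/78125) + ((31/32) + h) * ((-1144/390625) + ((31/32) + h) * ((1188/9765625) + ((31/32) + h) * ((-17656/9765625) + ((31/32) + h) * ((-23102/48828125) + ((31/32) + h) * ((-42192/244140625) + ((31/32) + h) * ((-84728/1220703125) + ((31/32) + h) * ((-426064/30517578125) + ((31/32) + h) * ((-107239/30517578125) + ((31/32) + h) * ((-116644/152587890625) + ((31/32) + h) * ((-71874/762939453125) + ((31/32) + h) * ((-58564/3814697265625) + ((31/32) + h) * (-161051/95367431640625)))))))))))))))) = (50713895087764488081633025954299/3602879701896396800000000000000000000) * h ^ 0 + (-16427350022197039697752301245073/22517998136852480000000000000000000) * h ^ 1 + (9428206988394256819012046720599/703687441776640000000000000000000) * h ^ 2 + (-1852225544156204933227942446361/21990232555520000000000000000000) * h ^ 3 + (-44441435110575055202728503253/687194767360000000000000000000) * h ^ 4 + (-4419745705828748204173272953/107374182400000000000000000000) * h ^ 5 + (-13140605297237568780184141/671088640000000000000000000)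 * h ^ 6 + (-155246807217219952740797/20971520000000000000000000) * h ^ 7 + (-1558605069294854113827/655360000000000000000000) * h ^ 8 + (-12932515712516368211/20480000000000000000000) * h ^ 9 + (-451562535021363303/3200000000000000000000) * h ^ 10 + (-528147361760843/20000000000000000000) * h ^ 11 + (-2475326566471/625000000000000000) * h ^ 12 + (-9156828791/19531250000000000) * h ^ 13 + (-24347983/610351562500000) * h ^ 14 + (-161051/95367431640625) * h ^ 15) by field. rewrite E. clear E.
  pose proof (pow_le_up h 1 (1/64) ltac:(lra) ltac:(lra)).
  pose proof (pow_le h 2 ltac:(lra)).
  pose proof (pow_le_up h 3 (1/64) ltac:(lra) ltac:(lra)).
  pose proof (pow_le_up h 4 (1/64) ltac:(lra) ltac:(lra)).
  pose proof (pow_le_up h 5 (1/64) ltac:(lra) ltac:(lra)).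
  pose proof (pow_le_up h 6 (1/64) ltac:(lra) ltac:(lra)).
  pose proof (pow_le_up h 7 (1/64) ltac:(lra) ltac:(lra)).
  pose proof (pow_le_up h 8 (1/64) ltac:(lra) ltac:(lra)).
  pose proof (pow_le_up h 9 (1/64) ltac:(lra) ltac:(lra)).
  pose proof (pow_le_up h 10 (1/64) ltac:(lra) ltac:(lra)).
  pose proof (pow_le_up h 11 (1/64) ltac:(lra) ltac:(lra)).
  pose proof (pow_le_up h 12 (1/64) ltac:(lra) ltac:(lra)).
  pose proof (pow_le_up h 13 (1/64) ltac:(lra) ltac:(lra)).
  pose proof (pow_le_up h 14 (1/64) ltac:(lra) ltac:(lra)).
  pose proof (pow_le_up h 15 (1/64) ltac:(lra) ltac:(lra)).
  lra. Qed.
Lemma Zq_11 : forall h, 0 <= h <= (1/128) -> 0 < Zq_p ((63/64) + h).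
Proof. intros h Hh. unfold Zq_p.
  assert (E: ((176/3125) + ((63/64) + h) * ((-88/625) + ((63/64) + h) * ((1584/15625) + ((63/64) + h) * ((-902/78125) + ((63/64) + h) * ((-1144/390625) + ((63/64) + h) * ((1188/9765625) + ((63/64) + h) * ((-17656/9765625) + ((63/64) + h) * ((-23102/48828125) + ((63/64) + h) * ((-42192/244140625) + ((63/64) + h) * ((-84728/1220703125) + ((63/64) + h) * ((-426064/30517578125) + ((63/64) + h) * ((-107239/30517578125) + ((63/64) + h) * ((-116644/152587890625) + ((63/64) + h) * ((-71874/762939453125) + ((63/64) + h) * ((-58564/3814697265625) + ((63/64) + h) * (-161051/95367431640625)))))))))))))))) = (663850539562992744181924200825870043/118059162071741130342400000000000000000000) * h ^ 0 + (-137802737656190081755439185542720977/368934881474191032320000000000000000000) * h ^ 1 + (53920474408418536102241764343673207/5764607523034234880000000000000000000) * h ^ 2 + (-7959967666546774453918638313265561/90071992547409920000000000000000000) * h ^ 3 + (-95644203639300728116563962780021/1407374883553280000000000000000000) * h ^ 4 + (-4731888719817922409531421930297/109951162777600000000000000000000) * h ^ 5 + (-7011848367314189595601050413/343597383680000000000000000000) * h ^ 6 + (-41369340359159531660638397/5368709120000000000000000000) * h ^ 7 + (-207082032088850955015939/83886080000000000000000000) * h ^ 8 + (-857050160381702225939/1310720000000000000000000) * h ^ 9 + (-14921358282436281479/102400000000000000000000) * h ^ 10 + (-8690863838436043/320000000000000000000) * h ^ 11 + (-20283213617447/5000000000000000000) * h ^ 12 + (-37312440759/78125000000000000) * h ^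 13 + (-49179119/1220703125000000) * h ^ 14 + (-161051/95367431640625) * h ^ 15) by field. rewrite E. clear E.
  pose proof (pow_le_up h 1 (1/128) ltac:(lra) ltac:(lra)).
  pose proof (pow_le h 2 ltac:(lra)).
  pose proof (pow_le_up h 3 (1/128) ltac:(lra) ltac:(lra)).
  pose proof (pow_le_up h 4 (1/128) ltac:(lra) ltac:(lra)).
  pose proof (pow_le_up h 5 (1/128) ltac:(lra) ltac:(lra)).
  pose proof (pow_le_up h 6 (1/128) ltac:(lra) ltac:(lra)).
  pose proof (pow_le_up h 7 (1/128) ltac:(lra) ltac:(lra)).
  pose proof (pow_le_up h 8 (1/128) ltac:(lra) ltac:(lra)).
  pose proof (pow_le_up h 9 (1/128) ltac:(lra) ltac:(lra)).
  pose proof (pow_le_up h 10 (1/128) ltac:(lra) ltac:(lra)).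
  pose proof (pow_le_up h 11 (1/128) ltac:(lra) ltac:(lra)).
  pose proof (pow_le_up h 12 (1/128) ltac:(lra) ltac:(lra)).
  pose proof (pow_le_up h 13 (1/128) ltac:(lra) ltac:(lra)).
  pose proof (pow_le_up h 14 (1/128) ltac:(lra) ltac:(lra)).
  pose proof (pow_le_up h 15 (1/128) ltac:(lra) ltac:(lra)).
  lra. Qed.
Lemma Zq_12 : forall h, 0 <= h <= (1/128) -> 0 < Zq_p ((127/128) + h).
Proof. intros h Hh. unfold Zq_p.
  assert (E: ((176/3125) + ((127/128) + h) * ((-88/625) + ((127/128) + h) * ((1584/15625) + ((127/128) + h) * ((-902/78125) + ((127/128) + h) * ((-1144/390625) + ((127/128) + h) * ((1188/9765625) + ((127/128) + h) * ((-17656/9765625) + ((127/128) + h) * ((-23102/48828125) + ((127/128) + h) * ((-42192/244140625) + ((127/128) + h) * ((-84728/1220703125) + ((127/128) + h) * ((-426064/30517578125) + ((127/128) + h) * ((-107239/30517578125) + ((127/128) + h) * ((-116644/152587890625) + ((127/128) + h) * ((-71874/762939453125) + ((127/128) + h) * ((-58564/3814697265625) + ((127/128) + h) * (-161051/95367431640625)))))))))))))))) = (12508832445460267125652004814468108900507/3868562622766813359059763200000000000000000000) * h ^ 0 + (-1472927468123022602520071181580084223057/6044629098073145873530880000000000000000000) * h ^ 1 + (342719422710678773112217683188146374583/47223664828696452136960000000000000000000) * h ^ 2 + (-33397307959972480738705095798891401881/368934881474191032320000000000000000000) * h ^ 3 + (-200779006629518395058724670220940469/2882303761517117440000000000000000000)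 * h ^ 4 + (-4954275504381292929818757117645497/112589990684262400000000000000000000) * h ^ 5 + (-3664947031611846194548811668717/175921860444160000000000000000000) * h ^ 6 + (-10804589281993035794841056957/1374389534720000000000000000000) * h ^ 7 + (-27004481375332563791579331/10737418240000000000000000000) * h ^ 8 + (-55813860960049309874579/83886080000000000000000000) * h ^ 9 + (-485185186819662544071/3276800000000000000000000) * h ^ 10 + (-141012687250133963/5120000000000000000000) * h ^ 11 + (-164214921114343/40000000000000000000) * h ^ 12 + (-150630160439/312500000000000000) * h ^ 13 + (-98841391/2441406250000000) * h ^ 14 + (-161051/95367431640625) * h ^ 15) by field. rewrite E. clear E.
  pose proof (pow_le_up h 1 (1/128) ltac:(lra) ltac:(lra)).
  pose proof (pow_le h 2 ltac:(lra)).
  pose proof (pow_le_up h 3 (1/128) ltac:(lra) ltac:(lra)).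
  pose proof (pow_le_up h 4 (1/128) ltac:(lra) ltac:(lra)).
  pose proof (pow_le_up h 5 (1/128) ltac:(lra) ltac:(lra)).
  pose proof (pow_le_up h 6 (1/128) ltac:(lra) ltac:(lra)).
  pose proof (pow_le_up h 7 (1/128) ltac:(lra) ltac:(lra)).
  pose proof (pow_le_up h 8 (1/128) ltac:(lra) ltac:(lra)).
  pose proof (pow_le_up h 9 (1/128) ltac:(lra) ltac:(lra)).
  pose proof (pow_le_up h 10 (1/128) ltac:(lra) ltac:(lra)).
  pose proof (pow_le_up h 11 (1/128) ltac:(lra) ltac:(lra)).
  pose proof (pow_le_up h 12 (1/128) ltac:(lra) ltac:(lra)).
  pose proof (pow_le_up h 13 (1/128) ltac:(lra) ltac:(lra)).
  pose proof (pow_le_up h 14 (1/128) ltac:(lra) ltac:(lra)).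
  pose proof (pow_le_up h 15 (1/128) ltac:(lra) ltac:(lra)).
  lra. Qed.
Lemma Zq : forall z, (0) <= z <= (1) -> 0 < Zq_p z.
Proof. intros z H.
  destruct (Rle_lt_dec z (1/4)) as [H0|H0].
  { replace z with ((0) + (z - (0))) by ring. apply Zq_0. lra. }
  destruct (Rle_lt_dec z (1/2)) as [H1|H1].
  { replace z with ((1/4) + (z - (1/4))) by ring. apply Zq_1. lra. }
  destruct (Rle_lt_dec z (5/8)) as [H2|H2].
  { replace z with ((1/2) + (z - (1/2))) by ring. apply Zq_2. lra. }
  destruct (Rle_lt_dec z (3/4)) as [H3|H3].
  { replace z with ((5/8) + (z - (5/8))) by ring. apply Zq_3. lra. }
  destruct (Rle_lt_dec z (13/16)) as [H4|H4].
  { replace z with ((3/4) + (z - (3/4))) by ring. apply Zq_4. lra. }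
  destruct (Rle_lt_dec z (7/8)) as [H5|H5].
  { replace z with ((13/16) + (z - (13/16))) by ring. apply Zq_5. lra. }
  destruct (Rle_lt_dec z (29/32)) as [H6|H6].
  { replace z with ((7/8) + (z - (7/8))) by ring. apply Zq_6. lra. }
  destruct (Rle_lt_dec z (15/16)) as [H7|H7].
  { replace z with ((29/32) + (z - (29/32))) by ring. apply Zq_7. lra. }
  destruct (Rle_lt_dec z (61/64)) as [H8|H8].
  { replace z with ((15/16) + (z - (15/16))) by ring. apply Zq_8. lra. }
  destruct (Rle_lt_dec z (31/32)) as [H9|H9].
  { replace z with ((61/64) + (z - (61/64))) by ring. apply Zq_9. lra. }
  destruct (Rle_lt_dec z (63/64)) as [H10|H10].
  { replace z with ((31/32) + (z - (31/32))) by ring. apply Zq_10. lra. }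
  destruct (Rle_lt_dec z (127/128)) as [H11|H11].
  { replace z with ((63/64) + (z - (63/64))) by ring. apply Zq_11. lra. }
  replace z with ((127/128) + (z - (127/128))) by ring. apply Zq_12. lra.
Qed.
Lemma Zq_id : forall z, (B4f z)^5 - (1 - z)^4 = z^5 * Zq_p z.
Proof. intros. unfold Zq_p, Slo, Sup, Pc, Pclo, ah, cl, Alo, Chi, T3f, T4f, D3f, B4f. field. Qed.
Definition SA_p (t:R) : R := ((1/6480) + t * ((-1/16200) + t * ((-1/388800) + t * (-1/34992000)))).
Lemma SA_0 : forall h, 0 <= h <= (1/100) -> 0 < SA_p ((0) + h).
Proof. intros h Hh. unfold SA_p.
  assert (E: ((1/6480) + ((0) + h) * ((-1/16200) + ((0) + h) * ((-1/388800) + ((0) + h) * (-1/34992000)))) = (1/6480) * h ^ 0 + (-1/16200) * h ^ 1 + (-1/388800) * h ^ 2 + (-1/34992000) * h ^ 3) by field. rewrite E. clear E.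
  pose proof (pow_le_up h 1 (1/100) ltac:(lra) ltac:(lra)).
  pose proof (pow_le_up h 2 (1/100) ltac:(lra) ltac:(lra)).
  pose proof (pow_le_up h 3 (1/100) ltac:(lra) ltac:(lra)).
  lra. Qed.
Lemma SA : forall t, (0) <= t <= (1/100) -> 0 < SA_p t.
Proof. intros t H.
  replace t with ((0) + (t - (0))) by ring. apply SA_0. lra.
Qed.
Lemma SA_id : forall t, D3f (Alo t) - Sup t = t^3 * SA_p t.
Proof. intros. unfold SA_p, Slo, Sup, Pc, Pclo, ah, cl, Alo, Chi, T3f, T4f, D3f, B4f. field. Qed.
Definition SC_p (t:R) : R := ((19/6480) + t * ((-7/900) + t * ((-169/129600) + t * ((-4879/8748000) + t * ((-12641/69984000) + t * ((-4757/167961600) + t * ((-88199/25194240000) + t * ((-503/933120000) + t * ((31/414720000) + t * (-1/276480000)))))))))).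
Lemma SC_0 : forall h, 0 <= h <= (1/100) -> 0 < SC_p ((0) + h).
Proof. intros h Hh. unfold SC_p.
  assert (E: ((19/6480) + ((0) + h) * ((-7/900) + ((0) + h) * ((-169/129600) + ((0) + h) * ((-4879/8748000) + ((0) + h) * ((-12641/69984000) + ((0) + h) * ((-4757/167961600) + ((0) + h) * ((-88199/25194240000) + ((0) + h) * ((-503/933120000) + ((0) + h) * ((31/414720000) + ((0) + h) * (-1/276480000)))))))))) = (19/6480) * h ^ 0 + (-7/900) * h ^ 1 + (-169/129600) * h ^ 2 + (-4879/8748000) * h ^ 3 + (-12641/69984000) * h ^ 4 + (-4757/167961600) * h ^ 5 + (-88199/25194240000) * h ^ 6 + (-503/933120000) * h ^ 7 + (31/414720000) * h ^ 8 + (-1/276480000) * h ^ 9) by field. rewrite E. clear E.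
  pose proof (pow_le_up h 1 (1/100) ltac:(lra) ltac:(lra)).
  pose proof (pow_le_up h 2 (1/100) ltac:(lra) ltac:(lra)).
  pose proof (pow_le_up h 3 (1/100) ltac:(lra) ltac:(lra)).
  pose proof (pow_le_up h 4 (1/100) ltac:(lra) ltac:(lra)).
  pose proof (pow_le_up h 5 (1/100) ltac:(lra) ltac:(lra)).
  pose proof (pow_le_up h 6 (1/100) ltac:(lra) ltac:(lra)).
  pose proof (pow_le_up h 7 (1/100) ltac:(lra) ltac:(lra)).
  pose proof (pow_le h 8 ltac:(lra)).
  pose proof (pow_le_up h 9 (1/100) ltac:(lra) ltac:(lra)).
  lra. Qed.
Lemma SC : forall t, (0) <= t <= (1/100) -> 0 < SC_p t.
Proof. intros t H.
  replace t with ((0) + (t - (0))) by ring. apply SC_0. lra.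
Qed.
Lemma SC_id : forall t, Pclo t * T3f (Chi t) - Sup t = t^3 * SC_p t.
Proof. intros. unfold SC_p, Slo, Sup, Pc, Pclo, ah, cl, Alo, Chi, T3f, T4f, D3f, B4f. field. Qed.
Definition nPc_p (t:R) : R := ((-1) + t * ((1/2) + t * ((-1/24) + t * ((1/720) + t * (-1/40320))))).
Lemma nPc_0 : forall h, 0 <= h <= (613/51200) -> 0 < nPc_p ((987/400) + h).
Proof. intros h Hh. unfold nPc_p.
  assert (E: ((-1) + ((987/400) + h) * ((1/2) + ((987/400) + h) * ((-1/24) + ((987/400) + h) * ((1/720) + ((987/400) + h) * (-1/40320))))) = (110399153/16384000000000) * h ^ 0 + (3258916419/10240000000) * h ^ 1 + (-4959967/153600000) * h ^ 2 + (659/576000) * h ^ 3 + (-1/40320) * h ^ 4) by field. rewrite E. clear E.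
  pose proof (pow_le h 1 ltac:(lra)).
  pose proof (pow_le_up h 2 (613/51200) ltac:(lra) ltac:(lra)).
  pose proof (pow_le h 3 ltac:(lra)).
  pose proof (pow_le_up h 4 (613/51200) ltac:(lra) ltac:(lra)).
  lra. Qed.
Lemma nPc_1 : forall h, 0 <= h <= (613/51200) -> 0 < nPc_p ((126949/51200) + h).
Proof. intros h Hh. unfold nPc_p.
  assert (E: ((-1) + ((126949/51200) + h) * ((1/2) + ((126949/51200) + h) * ((-1/24) + ((126949/51200) + h) * ((1/720) + ((126949/51200) + h) * (-1/40320))))) = (352114149258190998533/92358976733184000000000) * h ^ 0 + (429524467067342051/1352914698240000000) * h ^ 1 + (-189375054067/5872025600000) * h ^ 2 + (65539/57344000) * h ^ 3 + (-1/40320) * h ^ 4) by field. rewrite E. clear E.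
  pose proof (pow_le h 1 ltac:(lra)).
  pose proof (pow_le_up h 2 (613/51200) ltac:(lra) ltac:(lra)).
  pose proof (pow_le h 3 ltac:(lra)).
  pose proof (pow_le_up h 4 (613/51200) ltac:(lra) ltac:(lra)).
  lra. Qed.
Lemma nPc_2 : forall h, 0 <= h <= (613/25600) -> 0 < nPc_p ((63781/25600) + h).
Proof. intros h Hh. unfold nPc_p.
  assert (E: ((-1) + ((63781/25600) + h) * ((1/2) + ((63781/25600) + h) * ((-1/24) + ((63781/25600) + h) * ((1/720) + ((63781/25600) + h) * (-1/40320))))) = (131766005088640824079/17317308137472000000000) * h ^ 0 + (53560043700858659/169114337280000000) * h ^ 1 + (-141850595161/4404019200000) * h ^ 2 + (294619/258048000) * h ^ 3 + (-1/40320) * h ^ 4) by field. rewrite E. clear E.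
  pose proof (pow_le h 1 ltac:(lra)).
  pose proof (pow_le_up h 2 (613/25600) ltac:(lra) ltac:(lra)).
  pose proof (pow_le h 3 ltac:(lra)).
  pose proof (pow_le_up h 4 (613/25600) ltac:(lra) ltac:(lra)).
  lra. Qed.
Lemma nPc_3 : forall h, 0 <= h <= (613/12800) -> 0 < nPc_p ((32197/12800) + h).
Proof. intros h Hh. unfold nPc_p.
  assert (E: ((-1) + ((32197/12800) + h) * ((1/2) + ((32197/12800) + h) * ((-1/24) + ((32197/12800) + h) * ((1/720) + ((32197/12800) + h) * (-1/40320))))) = (5474493442122627973/360777252864000000000) * h ^ 0 + (6662439044009027/21139292160000000) * h ^ 1 + (-11790814003/367001600000) * h ^ 2 + (49001/43008000) * h ^ 3 + (-1/40320) * h ^ 4) by field. rewrite E. clear E.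
  pose proof (pow_le h 1 ltac:(lra)).
  pose proof (pow_le_up h 2 (613/12800) ltac:(lra) ltac:(lra)).
  pose proof (pow_le h 3 ltac:(lra)).
  pose proof (pow_le_up h 4 (613/12800) ltac:(lra) ltac:(lra)).
  lra. Qed.
Lemma nPc_4 : forall h, 0 <= h <= (613/6400) -> 0 < nPc_p ((3281/1280) + h).
Proof. intros h Hh. unfold nPc_p.
  assert (E: ((-1) + ((3281/1280) + h) * ((1/2) + ((3281/1280) + h) * ((-1/24) + ((3281/1280) + h) * ((1/720) + ((3281/1280) + h) * (-1/40320))))) = (3268016496455359/108233175859200000) * h ^ 0 + (6597554610319/21139292160000) * h ^ 1 + (-351925921/11010048000) * h ^ 2 + (14639/12902400) * h ^ 3 + (-1/40320) * h ^ 4) by field. rewrite E. clear E.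
  pose proof (pow_le h 1 ltac:(lra)).
  pose proof (pow_le_up h 2 (613/6400) ltac:(lra) ltac:(lra)).
  pose proof (pow_le h 3 ltac:(lra)).
  pose proof (pow_le_up h 4 (613/6400) ltac:(lra) ltac:(lra)).
  lra. Qed.
Lemma nPc_5 : forall h, 0 <= h <= (613/3200) -> 0 < nPc_p ((8509/3200) + h).
Proof. intros h Hh. unfold nPc_p.
  assert (E: ((-1) + ((8509/3200) + h) * ((1/2) + ((8509/3200) + h) * ((-1/24) + ((8509/3200) + h) * ((1/720) + ((8509/3200) + h) * (-1/40320))))) = (28089525487860471/469762048000000000) * h ^ 0 + (101074601870171/330301440000000) * h ^ 1 + (-725732227/22937600000) * h ^ 2 + (12097/10752000) * h ^ 3 + (-1/40320) * h ^ 4) by field. rewrite E. clear E.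
  pose proof (pow_le h 1 ltac:(lra)).
  pose proof (pow_le_up h 2 (613/3200) ltac:(lra) ltac:(lra)).
  pose proof (pow_le h 3 ltac:(lra)).
  pose proof (pow_le_up h 4 (613/3200) ltac:(lra) ltac:(lra)).
  lra. Qed.
Lemma nPc_6 : forall h, 0 <= h <= (613/1600) -> 0 < nPc_p ((4561/1600) + h).
Proof. intros h Hh. unfold nPc_p.
  assert (E: ((-1) + ((4561/1600) + h) * ((1/2) + ((4561/1600) + h) * ((-1/24) + ((4561/1600) + h) * ((1/720) + ((4561/1600) + h) * (-1/40320))))) = (30985325741293759/264241152000000000) * h ^ 0 + (12138927240719/41287680000000) * h ^ 1 + (-533269921/17203200000) * h ^ 2 + (17839/16128000) * h ^ 3 + (-1/40320) * h ^ 4) by field. rewrite E. clear E.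
  pose proof (pow_le h 1 ltac:(lra)).
  pose proof (pow_le_up h 2 (613/1600) ltac:(lra) ltac:(lra)).
  pose proof (pow_le h 3 ltac:(lra)).
  pose proof (pow_le_up h 4 (613/1600) ltac:(lra) ltac:(lra)).
  lra. Qed.
Lemma nPc_7 : forall h, 0 <= h <= (613/800) -> 0 < nPc_p ((2587/800) + h).
Proof. intros h Hh. unfold nPc_p.
  assert (E: ((-1) + ((2587/800) + h) * ((1/2) + ((2587/800) + h) * ((-1/24) + ((2587/800) + h) * ((1/720) + ((2587/800) + h) * (-1/40320))))) = (1240915685438213/5505024000000000) * h ^ 0 + (1397265442397/5160960000000) * h ^ 1 + (-42647923/1433600000) * h ^ 2 + (957/896000) * h ^ 3 + (-1/40320) * h ^ 4) by field. rewrite E. clear E.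
  pose proof (pow_le h 1 ltac:(lra)).
  pose proof (pow_le_up h 2 (613/800) ltac:(lra) ltac:(lra)).
  pose proof (pow_le h 3 ltac:(lra)).
  pose proof (pow_le_up h 4 (613/800) ltac:(lra) ltac:(lra)).
  lra. Qed.
Lemma nPc : forall t, (987/400) <= t <= (4) -> 0 < nPc_p t.
Proof. intros t H.
  destruct (Rle_lt_dec t (126949/51200)) as [H0|H0].
  { replace t with ((987/400) + (t - (987/400))) by ring. apply nPc_0. lra. }
  destruct (Rle_lt_dec t (63781/25600)) as [H1|H1].
  { replace t with ((126949/51200) + (t - (126949/51200))) by ring. apply nPc_1. lra. }
  destruct (Rle_lt_dec t (32197/12800)) as [H2|H2].
  { replace t with ((63781/25600) + (t - (63781/25600))) by ring. apply nPc_2. lra. }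
  destruct (Rle_lt_dec t (3281/1280)) as [H3|H3].
  { replace t with ((32197/12800) + (t - (32197/12800))) by ring. apply nPc_3. lra. }
  destruct (Rle_lt_dec t (8509/3200)) as [H4|H4].
  { replace t with ((3281/1280) + (t - (3281/1280))) by ring. apply nPc_4. lra. }
  destruct (Rle_lt_dec t (4561/1600)) as [H5|H5].
  { replace t with ((8509/3200) + (t - (8509/3200))) by ring. apply nPc_5. lra. }
  destruct (Rle_lt_dec t (2587/800)) as [H6|H6].
  { replace t with ((4561/1600) + (t - (4561/1600))) by ring. apply nPc_6. lra. }
  replace t with ((2587/800) + (t - (2587/800))) by ring. apply nPc_7. lra.
Qed.
Lemma nPc_id : forall t, - Pc t = nPc_p t.
Proof. intros. unfold nPc_p, Pc. field. Qed.
Lemma INR_fact_eq n z : Z.of_nat (fact n) = z -> INR (fact n) = IZR z.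
Proof. intros H. rewrite INR_IZR_INZ, H. reflexivity. Qed.
Ltac facts H :=
  repeat (match type of H with context [INR (fact ?n)] =>
    let z := eval vm_compute in (Z.of_nat (fact n)) in
    rewrite (INR_fact_eq n z) in H by (vm_compute; reflexivity) end).
Lemma sin_lo : forall x, 0 <= x <= PI -> x * Slo (x^2) <= sin x.
Proof.
  intros x Hx. destruct (sin_bound x 1 (proj1 Hx) (proj2 Hx)) as [H _].
  unfold sin_approx, sin_term in H. cbn [sum_f_R0 Nat.mul Nat.add] in H. facts H.
  eapply Rle_trans; [|exact H]. right. unfold Slo. field.
Qed.
Lemma sin_up : forall x, 0 <= x <= PI -> sin x <= x * Sup (x^2).
Proof.
  intros x Hx. destruct (sin_bound x 0 (proj1 Hx) (proj2 Hx)) as [_ H].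
  unfold sin_approx, sin_term in H. cbn [sum_f_R0 Nat.mul Nat.add] in H. facts H.
  eapply Rle_trans; [exact H|]. right. unfold Sup. field.
Qed.
Lemma cos_up : forall x, - PI / 2 <= x <= PI / 2 -> cos x <= Pc (x^2).
Proof.
  intros x Hx. destruct (cos_bound x 1 (proj1 Hx) (proj2 Hx)) as [_ H].
  unfold cos_approx, cos_term in H. cbn [sum_f_R0 Nat.mul Nat.add] in H. facts H.
  eapply Rle_trans; [exact H|]. right. unfold Pc. field.
Qed.
Lemma cos_lo : forall x, - PI / 2 <= x <= PI / 2 -> Pclo (x^2) <= cos x.
Proof.
  intros x Hx. destruct (cos_bound x 1 (proj1 Hx) (proj2 Hx)) as [H _].
  unfold cos_approx, cos_term in H. cbn [sum_f_R0 Nat.mul Nat.add] in H. facts H.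
  eapply Rle_trans; [|exact H]. right. unfold Pclo. field.
Qed.

Lemma ln_le_mono : forall a b, 0 < a -> a <= b -> ln a <= ln b.
Proof. intros a b Ha Hab. destruct (Req_dec a b) as [->|N]; [lra|]. left. apply ln_increasing; lra. Qed.
Lemma exp_le_mono : forall a b, a <= b -> exp a <= exp b.
Proof. intros a b H. destruct (Req_dec a b) as [->|N]; [lra|]. left. apply exp_increasing; lra. Qed.
Lemma pow5_le_inv : forall w B, 0 < w -> 0 < B -> w^5 <= B^5 -> w <= B.
Proof.
  intros w B Hw HB H. destruct (Rle_lt_dec w B) as [L|L]; auto.
  exfalso. assert (B*B < w*w) by nra. assert (B*B*B < w*w*w) by nra. assert (B*B*B*B < w*w*w*w) by nra.
  assert (B*B*B*B*B < w*w*w*w*w) by nra. simpl in H. lra.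
Qed.

Definition TT : R := 987/400.

Lemma t_bound : forall x, 0 < x < PI/2 -> x^2 < TT.
Proof.
  intros x Hx. pose proof PI_4. pose proof PI_RGT_0.
  assert (Hc: 0 < cos x) by (apply cos_gt_0; lra).
  assert (Hu := cos_up x ltac:(lra)).
  destruct (Rlt_le_dec (x^2) TT) as [L|L]; auto. exfalso.
  assert (x < 2) by lra.
  assert (x^2 <= 4) by nra.
  pose proof (nPc (x^2) ltac:(unfold TT in L; lra)) as HH. rewrite <- nPc_id in HH. lra.
Qed.



Section X.
Variable x : R.
Hypothesis Hx : 0 < x < PI/2.
Let t := x^2.

Lemma ht : 0 < t < TT.
Proof. split. unfold t. nra. apply t_bound; auto. Qed.
Lemma hsin : 0 < sin x.
Proof. pose proof PI_RGT_0. apply sin_gt_0; lra. Qed.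
Lemma hcos : 0 < cos x.
Proof. pose proof PI_RGT_0. apply cos_gt_0; lra. Qed.
Lemma hsinx : sin x < x.
Proof. apply sin_lt_x. lra. Qed.
Lemma hT : 0 <= t <= 987/400.
Proof. pose proof ht. unfold TT in *. lra. Qed.

Lemma hSlo_T4 : 1 < Slo t * T4f (ah t).
Proof.
  pose proof ht. pose proof (I1 t hT). pose proof (I1_id t).
  assert (0 < t^3 * I1_p t) by (apply Rmult_lt_0_compat; [apply pow_lt|]; lra). lra.
Qed.
Lemma hah : 0 <= ah t.
Proof. pose proof ht. unfold ah. nra. Qed.
Lemma hT4pos : 0 < T4f (ah t).
Proof. pose proof hah. unfold T4f. nra. Qed.
Lemma hSlo : 0 < Slo t.
Proof.
  pose proof hSlo_T4. pose proof hT4pos. destruct (Rle_lt_dec (Slo t) 0); auto.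
  assert (Slo t * T4f (ah t) <= 0) by nra. lra.
Qed.
Lemma hsin_lo : x * Slo t <= sin x.
Proof. pose proof PI_RGT_0. apply sin_lo. lra. Qed.

Definition al := ln (x / sin x).
Definition cc := ln (tan x / x).

Lemma hxs : 1 < x / sin x.
Proof. pose proof hsin. pose proof hsinx. apply (Rmult_lt_reg_r (sin x)); auto. field_simplify; lra. Qed.
Lemma al_pos : 0 < al.
Proof. unfold al. rewrite <- ln_1. apply ln_increasing; [lra| apply hxs]. Qed.
Lemma al_le : al <= ah t.
Proof.
  unfold al. rewrite <- (ln_exp (ah t)). apply ln_le_mono. pose proof hxs; lra.
  pose proof (exp_T4 (ah t) hah). fold (T4f (ah t)) in H.
  apply Rle_trans with (T4f (ah t)); [|unfold T4f in *; lra].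
  pose proof hsin. pose proof hsin_lo. pose proof hSlo. pose proof hSlo_T4. pose proof ht.
  apply (Rmult_le_reg_r (sin x)); auto.
  replace (x / sin x * sin x) with x by (field; lra).
  apply Rle_trans with (T4f (ah t) * (x * Slo t)); [nra|].
  apply Rmult_le_compat_l; [pose proof hT4pos; lra | auto].
Qed.

Lemma hcl_pos : 0 < cl t.
Proof. pose proof ht. unfold cl. nra. Qed.
Lemma hPc : cos x <= Pc t.
Proof. pose proof PI_RGT_0. apply cos_up. lra. Qed.
Lemma hI2 : Pc t < Slo t * D3f (cl t).
Proof.
  pose proof ht. pose proof (I2 t hT). pose proof (I2_id t).
  assert (0 < t^3 * I2_p t) by (apply Rmult_lt_0_compat; [apply pow_lt|]; lra). lra.
Qed.
Lemma hD3cl : 0 < D3f (cl t).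
Proof.
  pose proof hI2. pose proof hPc. pose proof hcos. pose proof hSlo.
  destruct (Rle_lt_dec (D3f (cl t)) 0); auto.
  assert (Slo t * D3f (cl t) <= 0) by nra. lra.
Qed.
Lemma htan : tan x = sin x / cos x.
Proof. reflexivity. Qed.
Lemma htx_pos : 0 < tan x / x.
Proof. rewrite htan. pose proof hsin. pose proof hcos. apply Rdiv_lt_0_compat; [apply Rdiv_lt_0_compat|]; lra. Qed.
Lemma cc_ge : cl t <= cc.
Proof.
  unfold cc. rewrite <- (ln_exp (cl t)). apply ln_le_mono. apply exp_pos.
  pose proof (expn_D3 (cl t) (Rlt_le _ _ hcl_pos)). fold (D3f (cl t)) in H.
  pose proof hsin. pose proof hcos. pose proof hsin_lo. pose proof hSlo. pose proof hI2. pose proof hPc.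
  pose proof hD3cl. pose proof (exp_pos (cl t)).
  assert (E: exp (- cl t) * exp (cl t) = 1) by (rewrite <- exp_plus; replace (- cl t + cl t) with 0 by ring; apply exp_0).
  assert (A: cos x <= sin x / x * exp (- cl t)).
  { apply Rle_trans with (Slo t * D3f (cl t)); [lra|].
    apply Rmult_le_compat; try lra.
    apply (Rmult_le_reg_r x); [lra|]. replace (sin x / x * x) with (sin x) by (field; lra). lra. }
  rewrite htan.
  replace (sin x / cos x / x) with ((sin x / x) / cos x) by (field; lra).
  apply (Rmult_le_reg_r (cos x)); auto.
  replace (sin x / x / cos x * cos x) with (sin x / x) by (field; lra).
  apply (Rmult_le_reg_r (exp (- cl t))); [apply exp_pos|].
  replace (exp (cl t) * cos x * exp (- cl t)) with (cos x * (exp (- cl t) * exp (cl t))) by ring. rewrite E. lra.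
Qed.
Lemma cc_pos : 0 < cc.
Proof. pose proof cc_ge. pose proof hcl_pos. lra. Qed.

Lemma hB4pos : forall z, 0 <= z <= 1 -> 0 < B4f z.
Proof.
  intros z Hz. unfold B4f.
  assert (z^2 <= 1) by (apply Rle_trans with (1^2); [apply pow_le_up; lra| simpl; lra]).
  assert (z^3 <= 1) by (apply Rle_trans with (1^3); [apply pow_le_up; lra| simpl; lra]).
  assert (z^4 <= 1) by (apply Rle_trans with (1^4); [apply pow_le_up; lra| simpl; lra]).
  lra.
Qed.
Lemma hPc_pos : 0 < Pc t.
Proof. pose proof hPc. pose proof hcos. lra. Qed.
Lemma hPc_le1 : Pc t <= 1.
Proof.
  pose proof ht. unfold Pc. unfold TT in *.
  assert (0 <= t * (12 - t)) by nra. assert (0 <= t^3 * (56 - t)) by (apply Rmult_le_pos; [apply pow_le|]; lra).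
  nra.
Qed.
Lemma hZ : Rpower (Pc t) (4/5) <= B4f (1 - Pc t).
Proof.
  pose proof hPc_pos. pose proof hPc_le1.
  set (z := 1 - Pc t).
  assert (Hz: 0 <= z <= 1) by (unfold z; lra).
  pose proof (hB4pos z Hz).
  apply pow5_le_inv; auto. unfold Rpower. apply exp_pos.
  assert (E: Rpower (Pc t) (4/5) ^ 5 = Pc t ^ 4).
  { rewrite <- Rpower_pow by (unfold Rpower; apply exp_pos).
    rewrite Rpower_mult. replace (4/5 * INR 5) with (INR 4) by (simpl; field).
    apply Rpower_pow; lra. }
  rewrite E. replace (Pc t) with (1 - z) by (unfold z; ring).
  pose proof (Zq_id z). pose proof (Zq z Hz).
  destruct (Req_dec z 0) as [Z0|Z0].
  - rewrite Z0. unfold B4f. simpl. lra.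
  - assert (0 < z^5 * Zq_p z) by (apply Rmult_lt_0_compat; [apply pow_lt; lra| lra]). lra.
Qed.
Lemma hE1poly : 2 + B4f (1 - Pc t) < 3 * D3f (4/5 * ah t).
Proof.
  pose proof ht. pose proof (E1 t hT). pose proof (E1_id t).
  assert (0 < t^3 * E1_p t) by (apply Rmult_lt_0_compat; [apply pow_lt|]; lra). lra.
Qed.
Lemma E1_main : 2 * exp (4/5 * al) + exp (- (4/5) * cc) < 3.
Proof.
  pose proof hsin. pose proof hcos. pose proof hPc_pos. pose proof hPc_le1.
  assert (Ecc: exp (- (4/5) * cc) = exp (4/5 * al) * Rpower (cos x) (4/5)).
  { unfold cc, al, Rpower. rewrite <- exp_plus. f_equal.
    rewrite htan. replace (sin x / cos x / x) with (/ ((x / sin x) * cos x)) by (field; lra).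
    rewrite ln_Rinv by (apply Rmult_lt_0_compat; [pose proof hxs|]; lra).
    rewrite ln_mult by (try pose proof hxs; lra). ring. }
  rewrite Ecc.
  assert (Hc: Rpower (cos x) (4/5) <= B4f (1 - Pc t)).
  { apply Rle_trans with (Rpower (Pc t) (4/5)); [|apply hZ].
    apply Rle_Rpower_l; [lra|]. split; [lra| apply hPc]. }
  pose proof hE1poly.
  assert (HB: 0 < B4f (1 - Pc t)) by (apply hB4pos; lra).
  assert (HD: 0 < D3f (4/5 * ah t)) by lra.
  assert (He: exp (4/5 * al) <= 1 / D3f (4/5 * ah t)).
  { pose proof (expn_D3 (4/5 * ah t) ltac:(pose proof hah; lra)). fold (D3f (4/5 * ah t)) in H4.
    assert (exp (4/5 * al) <= exp (4/5 * ah t)) by (apply exp_le_mono; pose proof al_le; lra).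
    assert (E: exp (- (4/5 * ah t)) * exp (4/5 * ah t) = 1) by (rewrite <- exp_plus; replace (- (4/5 * ah t) + 4/5 * ah t) with 0 by ring; apply exp_0).
    apply Rle_trans with (exp (4/5 * ah t)); auto.
    apply (Rmult_le_reg_r (D3f (4/5 * ah t))); auto.
    replace (1 / D3f (4 / 5 * ah t) * D3f (4 / 5 * ah t)) with 1 by (field; lra).
    pose proof (exp_pos (4/5 * ah t)). nra. }
  pose proof (exp_pos (4/5 * al)).
  assert (Rpower (cos x) (4/5) > 0) by (unfold Rpower; apply exp_pos).
  apply Rle_lt_trans with (exp (4/5 * al) * (2 + B4f (1 - Pc t))); [nra|].
  apply Rle_lt_trans with (1 / D3f (4 / 5 * ah t) * (2 + B4f (1 - Pc t))); [apply Rmult_le_compat_r; lra|].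
  apply (Rmult_lt_reg_r (D3f (4/5 * ah t))); auto.
  replace (1 / D3f (4 / 5 * ah t) * (2 + B4f (1 - Pc t)) * D3f (4 / 5 * ah t)) with (2 + B4f (1 - Pc t)) by (field; lra).
  lra.
Qed.

Lemma I3_main : cc / (exp (4/5 * cc) - 1) <= 5/4 - al - 2/5 * al^2.
Proof.
  pose proof cc_pos. pose proof cc_ge. pose proof al_pos. pose proof al_le. pose proof hcl_pos. pose proof hah.
  pose proof (exp_T3 (4/5 * cc) ltac:(lra)).
  set (d := 4/5 + 8/25 * cl t + 32/375 * (cl t)^2).
  assert (Hd: 0 < d) by (unfold d; nra).
  assert (HI: 1 <= (5/4 - ah t - 2/5 * (ah t)^2) * d).
  { pose proof ht. pose proof (I3 t hT). pose proof (I3_id t). unfold d.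
    assert (0 < t^2 * I3_p t) by (apply Rmult_lt_0_compat; [apply pow_lt|]; lra). lra. }
  assert (Hdc: d <= 4/5 + 8/25 * cc + 32/375 * cc^2) by (unfold d; nra).
  assert (He: cc * d <= exp (4/5 * cc) - 1) by nra.
  assert (Hep: 0 < exp (4/5 * cc) - 1) by nra.
  apply Rle_trans with (1 / d).
  - apply (Rmult_le_reg_r (exp (4/5 * cc) - 1)); auto.
    replace (cc / (exp (4 / 5 * cc) - 1) * (exp (4 / 5 * cc) - 1)) with cc by (field; lra).
    apply (Rmult_le_reg_r d); auto.
    replace (1 / d * (exp (4 / 5 * cc) - 1) * d) with (exp (4 / 5 * cc) - 1) by (field; lra). lra.
  - apply (Rmult_le_reg_r d); auto. replace (1 / d * d) with 1 by (field; lra).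
    assert (5/4 - ah t - 2/5 * (ah t)^2 <= 5/4 - al - 2/5 * al^2) by nra. nra.
Qed.
End X.

Definition Psi (w : R) : R := (exp w - 1) / w.
Definition Lf (w : R) : R := ln (Psi w).
Definition Lp (w : R) : R := exp w / (exp w - 1) - 1 / w.

Lemma expm1_pos : forall w, 0 < w -> w < exp w - 1.
Proof. intros w Hw. pose proof (exp_ineq1 w ltac:(lra)). lra. Qed.
Lemma Psi_pos : forall w, 0 < w -> 0 < Psi w.
Proof. intros w Hw. unfold Psi. pose proof (expm1_pos w Hw). apply Rdiv_lt_0_compat; lra. Qed.

Lemma Lf_deriv : forall w, 0 < w -> is_derive Lf w (Lp w).
Proof.
  intros w Hw. pose proof (expm1_pos w Hw). pose proof (Psi_pos w Hw). unfold Lf, Lp.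
  unfold Psi in *. auto_derive.
  - repeat split; try lra. 
  - field. split; lra.
Qed.

Lemma Lp_alt : forall w, 0 < w -> Lp w = 1 + 1 / (exp w - 1) - 1 / w.
Proof. intros w Hw. pose proof (expm1_pos w Hw). unfold Lp. field. split; lra. Qed.

Lemma Lp_pos : forall w, 0 < w -> 0 <= Lp w.
Proof.
  intros w Hw. pose proof (expm1_pos w Hw). unfold Lp.
  pose proof (exp_ineq1 (-w) ltac:(lra)).
  assert (E: exp (-w) * exp w = 1) by (rewrite <- exp_plus; replace (-w + w) with 0 by ring; apply exp_0).
  pose proof (exp_pos w).
  assert (exp w - 1 <= w * exp w) by nra.
  apply Rle_trans with (exp w / (exp w - 1) - exp w / (exp w - 1)); [lra|].
  assert (1 / w <= exp w / (exp w - 1)).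
  { apply (Rmult_le_reg_r (w * (exp w - 1))). nra.
    replace (1 / w * (w * (exp w - 1))) with (exp w - 1) by (field; lra).
    replace (exp w / (exp w - 1) * (w * (exp w - 1))) with (w * exp w) by (field; lra). lra. }
  lra.
Qed.

Lemma Lp_pade : forall w, 0 < w -> Lp w <= 1/2 + w/12.
Proof.
  intros w Hw. pose proof (expm1_pos w Hw). rewrite Lp_alt by auto.
  pose proof (exp_T5 w ltac:(lra)).
  set (D := 1 - w/2 + w^2/12).
  assert (HD: 0 < D) by (pose proof (pow2_ge_0 (w-3)); unfold D; nra).
  assert (HP: 0 <= w^5 * (1/720 - w/1440 + w^2/1440)) by (apply Rmult_le_pos; [apply pow_le; lra| pose proof (pow2_ge_0 (w-1/2)); nra]).
  assert (Hk: w <= (exp w - 1) * D).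
  { apply Rle_trans with ((w + w^2/2 + w^3/6 + w^4/24 + w^5/120) * D).
    - assert (Eq: (w + w^2/2 + w^3/6 + w^4/24 + w^5/120) * D = w + w^5 * (1/720 - w/1440 + w^2/1440)) by (unfold D; field). lra.
    - apply Rmult_le_compat_r; lra. }
  assert (1 / (exp w - 1) <= D / w).
  { apply (Rmult_le_reg_r (w * (exp w - 1))). nra.
    replace (1 / (exp w - 1) * (w * (exp w - 1))) with w by (field; lra).
    replace (D / w * (w * (exp w - 1))) with ((exp w - 1) * D) by (field; lra). lra. }
  replace (1/2 + w/12) with (1 + D / w - 1 / w) by (unfold D; field; lra). lra.
Qed.

Lemma sinh_ineq : forall q, 0 <= q -> 2 * q <= exp q - exp (- q).
Proof. intros q Hq. pose proof (exp_T3 q Hq). pose proof (expn_D2 q Hq). nra. Qed.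

Lemma Lp_deriv : forall w, 0 < w -> is_derive Lp w (1 / w^2 - exp w / (exp w - 1)^2).
Proof.
  intros w Hw. pose proof (expm1_pos w Hw). unfold Lp. auto_derive.
  - repeat split; lra.
  - field. split; lra.
Qed.

Lemma Lp_deriv_nonneg : forall w, 0 < w -> 0 <= 1 / w^2 - exp w / (exp w - 1)^2.
Proof.
  intros w Hw. pose proof (expm1_pos w Hw).
  set (q := w / 2). set (E := exp q).
  assert (Hq: 0 < q) by (unfold q; lra).
  assert (HE: exp w = E * E) by (unfold E, q; rewrite <- exp_plus; f_equal; field).
  assert (HEi: exp (- q) * E = 1) by (unfold E; rewrite <- exp_plus; replace (-q + q) with 0 by ring; apply exp_0).
  pose proof (sinh_ineq q ltac:(lra)). fold E in H0.
  pose proof (exp_pos q). fold E in H1. pose proof (exp_pos (-q)).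
  assert (K1: 0 <= E * E - 1 - 2 * q * E) by nra.
  assert (K2: 0 <= E * E - 1 + 2 * q * E) by nra.
  assert (K: w^2 * exp w <= (exp w - 1)^2).
  { rewrite HE. replace w with (2 * q) by (unfold q; field).
    assert (0 <= (E * E - 1 - 2 * q * E) * (E * E - 1 + 2 * q * E)) by (apply Rmult_le_pos; lra).
    nra. }
  assert (exp w / (exp w - 1)^2 <= 1 / w^2).
  { apply (Rmult_le_reg_r (w^2 * (exp w - 1)^2)). apply Rmult_lt_0_compat; apply pow_lt; lra.
    replace (exp w / (exp w - 1) ^ 2 * (w ^ 2 * (exp w - 1) ^ 2)) with (w^2 * exp w) by (field; lra).
    replace (1 / w ^ 2 * (w ^ 2 * (exp w - 1) ^ 2)) with ((exp w - 1)^2) by (field; lra). lra. }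
  lra.
Qed.

Lemma Lp_mono : forall w1 w2, 0 < w1 -> w1 <= w2 -> Lp w1 <= Lp w2.
Proof.
  intros w1 w2 H1 H12. apply (mono0 Lp (fun w => 1 / w^2 - exp w / (exp w - 1)^2)); auto.
  - intros y Hy. apply Lp_deriv. lra.
  - intros y Hy. apply Lp_deriv_nonneg. lra.
Qed.

Lemma Lf_incr : forall w1 w2, 0 < w1 -> w1 <= w2 -> Lf w1 <= Lf w2.
Proof.
  intros w1 w2 H1 H12. apply (mono0 Lf Lp); auto.
  - intros y Hy. apply Lf_deriv. lra.
  - intros y Hy. apply Lp_pos. lra.
Qed.

Lemma Lf_cvx : forall w1 w2, 0 < w1 -> w1 <= w2 -> Lf w2 - Lf w1 <= (w2 - w1) * Lp w2.
Proof.
  intros w1 w2 H1 H12.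
  assert (H := mono0 (fun w => Lp w2 * w - Lf w) (fun w => Lp w2 - Lp w) w1 w2 H12).
  cbv beta in H.
  enough (Lp w2 * w1 - Lf w1 <= Lp w2 * w2 - Lf w2) by lra.
  apply H.
  - intros y Hy.
    assert (A: is_derive (fun w => Lp w2 * w) y (Lp w2)) by (auto_derive; auto; ring).
    pose proof (Lf_deriv y ltac:(lra)) as B.
    exact (is_derive_minus _ _ _ _ _ A B).
  - intros y Hy. pose proof (Lp_mono y w2 ltac:(lra) ltac:(lra)). lra.
Qed.

Lemma Lf_pade : forall w1 w2, 0 < w1 -> w1 <= w2 -> Lf w2 - Lf w1 <= (w2 - w1) * (1/2 + w2/12).
Proof.
  intros w1 w2 H1 H12.
  assert (H := mono0 (fun w => (1/2 + w2/12) * w - Lf w) (fun w => (1/2 + w2/12) - Lp w) w1 w2 H12).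
  cbv beta in H.
  enough ((1/2 + w2/12) * w1 - Lf w1 <= (1/2 + w2/12) * w2 - Lf w2) by lra.
  apply H.
  - intros y Hy.
    assert (A: is_derive (fun w => (1/2 + w2/12) * w) y (1/2 + w2/12)) by (auto_derive; auto; ring).
    pose proof (Lf_deriv y ltac:(lra)) as B.
    exact (is_derive_minus _ _ _ _ _ A B).
  - intros y Hy. pose proof (Lp_pade y ltac:(lra)). lra.
Qed.

Lemma exp_inv_mul : forall y, exp (- y) * exp y = 1.
Proof. intros. rewrite <- exp_plus. replace (-y + y) with 0 by ring. apply exp_0. Qed.

Lemma psi_form1 : forall al a, 0 < al -> 0 < a -> 2 * (exp (a * al) - 1) = a * (2 * al * Psi (a * al)).
Proof. intros. unfold Psi. field. nra. Qed.
Lemma psi_form2 : forall c r, 0 < c -> 0 < r -> (1 - exp (- (r * c))) / r = c * Psi (r * c) * exp (- (r * c)).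
Proof.
  intros. unfold Psi. pose proof (exp_inv_mul (r * c)).
  field_simplify; [|nra|nra]. replace (exp (r * c) * c * exp (- (r * c))) with (c * (exp (- (r * c)) * exp (r * c))) by ring.
  rewrite H1. field. lra.
Qed.

Lemma key_ineq : forall al c r a, 0 < al -> 0 < c -> 0 < r <= 4/5 -> 0 < a <= 12/5 - 2*r ->
  2 * exp (4/5 * al) + exp (- (4/5) * c) < 3 ->
  c / (exp (4/5 * c) - 1) <= 5/4 - al - 2/5 * al^2 ->
  2 * al * Psi (a * al) < c * Psi (r * c) * exp (- (r * c)).
Proof.
  intros al c r a Hal Hc Hr Ha HE HI.
  assert (E1l: ln (2 * al) + Lf (4/5 * al) < ln c + Lf (4/5 * c) - 4/5 * c).
  { assert (A: 2 * al * Psi (4/5 * al) < c * Psi (4/5 * c) * exp (- (4/5 * c))).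
    { rewrite <- psi_form2 by lra.
      assert (2 * (exp (4/5 * al) - 1) = 4/5 * (2 * al * Psi (4/5 * al))) by (apply psi_form1; lra).
      replace (- (4/5) * c) with (- (4/5 * c)) in HE by ring. 
      apply (Rmult_lt_reg_l (4/5)); [lra|]. 
      replace (4 / 5 * ((1 - exp (- (4 / 5 * c))) / (4 / 5))) with (1 - exp (- (4/5 * c))) by field. lra. }
    pose proof (Psi_pos (4/5 * al) ltac:(lra)). pose proof (Psi_pos (4/5 * c) ltac:(lra)).
    apply ln_increasing in A; [|apply Rmult_lt_0_compat; lra].
    rewrite !ln_mult in A; try lra; try (apply Rmult_lt_0_compat; lra); try apply exp_pos.
    rewrite ln_exp in A. unfold Lf. rewrite (ln_mult 2 al) by lra. lra. }
  assert (CA: Lf (a * al) <= Lf (4/5 * al) + (4/5 - r) * (al + 2/5 * al^2)).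
  { destruct (Rle_lt_dec a (4/5)) as [L|L].
    - pose proof (Lf_incr (a * al) (4/5 * al) ltac:(nra) ltac:(nra)).
      assert (0 <= (4/5 - r) * (al + 2/5 * al^2)) by (apply Rmult_le_pos; nra). lra.
    - pose proof (Lf_pade (4/5 * al) (a * al) ltac:(nra) ltac:(nra)).
      assert ((a * al - 4/5 * al) * (1/2 + a * al / 12) <= (4/5 - r) * (al + 2/5 * al^2)).
      { assert (0 <= a * al - 4/5 * al) by nra.
        assert (1/2 + a * al / 12 <= 1/2 + al/5) by nra.
        apply Rle_trans with ((a * al - 4/5 * al) * (1/2 + al/5)); [apply Rmult_le_compat_l; lra|].
        nra. }
      lra. }
  assert (CB: Lf (4/5 * c) - Lf (r * c) <= (4/5 - r) * (c - al - 2/5 * al^2)).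
  { pose proof (Lf_cvx (r * c) (4/5 * c) ltac:(nra) ltac:(nra)).
    rewrite Lp_alt in H by lra.
    assert (Hm: 0 < exp (4/5 * c) - 1) by (pose proof (expm1_pos (4/5 * c) ltac:(lra)); lra).
    assert (E: (4/5 * c - r * c) * (1 + 1 / (exp (4/5 * c) - 1) - 1 / (4/5 * c)) = (4/5 - r) * (c + c / (exp (4/5 * c) - 1) - 5/4)) by (field; lra).
    rewrite E in H.
    assert ((4/5 - r) * (c + c / (exp (4/5 * c) - 1) - 5/4) <= (4/5 - r) * (c - al - 2/5 * al^2)) by (apply Rmult_le_compat_l; lra).
    lra. }
  assert (F: ln (2 * al) + Lf (a * al) < ln c + Lf (r * c) - r * c) by lra.
  pose proof (Psi_pos (a * al) ltac:(nra)). pose proof (Psi_pos (r * c) ltac:(nra)).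
  apply ln_lt_inv; [apply Rmult_lt_0_compat; lra| apply Rmult_lt_0_compat; [apply Rmult_lt_0_compat; lra| apply exp_pos]|].
  rewrite !ln_mult; try lra; try (apply Rmult_lt_0_compat; lra); try apply exp_pos.
  rewrite ln_exp. unfold Lf in F. rewrite (ln_mult 2 al) in F by lra. lra.
Qed.

Lemma backward : forall k p, 1 <= k -> - (12 / (5 * (k + 2))) <= p < 0 ->
  forall x, 0 < x < PI / 2 ->
  2 / (k + 2) * Rpower (sin x / x) (k * p) + k / (k + 2) * Rpower (tan x / x) p < 1.
Proof.
  intros k p Hk Hp x Hx.
  set (r := - p). set (a := k * r).
  assert (Hr0: 0 < r) by (unfold r; lra).
  assert (Hrk: r * (k + 2) <= 12/5).
  { unfold r. assert (12 / (5 * (k + 2)) * (k + 2) = 12/5) by (field; lra). nra. }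
  assert (Hr: r <= 4/5) by nra.
  assert (Ha: 0 < a <= 12/5 - 2 * r) by (unfold a; split; nra).
  pose proof (al_pos x Hx) as Hal. pose proof (cc_pos x Hx) as Hcc.
  pose proof (key_ineq (al x) (cc x) r a Hal Hcc ltac:(lra) Ha (E1_main x Hx) (I3_main x Hx)) as K.
  pose proof (hsin x Hx). pose proof (hcos x Hx).
  assert (R1: Rpower (sin x / x) (k * p) = exp (a * al x)).
  { unfold Rpower, al. f_equal.
    replace (sin x / x) with (/ (x / sin x)) by (field; lra).
    rewrite ln_Rinv by (apply Rdiv_lt_0_compat; lra). unfold a, r. ring. }
  assert (R2: Rpower (tan x / x) p = exp (- (r * cc x))).
  { unfold Rpower, cc. f_equal. unfold r. ring. }
  rewrite R1, R2.
  assert (A: 2 * (exp (a * al x) - 1) < k * (1 - exp (- (r * cc x)))).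
  { rewrite psi_form1 by lra.
    assert (k * (1 - exp (- (r * cc x))) = a * ((1 - exp (- (r * cc x))) / r)) by (unfold a; field; lra).
    rewrite H1. rewrite psi_form2 by lra. apply Rmult_lt_compat_l; lra. }
  apply (Rmult_lt_reg_r (k + 2)); [lra|].
  replace ((2 / (k + 2) * exp (a * al x) + k / (k + 2) * exp (- (r * cc x))) * (k + 2))
    with (2 * exp (a * al x) + k * exp (- (r * cc x))) by (field; lra).
  lra.
Qed.

Lemma f_exp_form : forall k p x, 0 < x < PI / 2 ->
  2 / (k + 2) * Rpower (sin x / x) (k * p) + k / (k + 2) * Rpower (tan x / x) p =
  2 / (k + 2) * exp (k * (- p) * al x) + k / (k + 2) * exp (- ((- p) * cc x)).
Proof.
  intros k p x Hx. pose proof (hsin x Hx). pose proof (hcos x Hx).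
  f_equal; f_equal; unfold Rpower, al, cc; f_equal.
  - replace (sin x / x) with (/ (x / sin x)) by (field; lra).
    rewrite ln_Rinv by (apply Rdiv_lt_0_compat; lra). ring.
  - ring.
Qed.

Lemma forward_pos : forall k p, 1 <= k -> 0 < p -> exists x, 0 < x < PI / 2 /\
  1 <= 2 / (k + 2) * Rpower (sin x / x) (k * p) + k / (k + 2) * Rpower (tan x / x) p.
Proof.
  intros k p Hk Hp.
  set (y := Rpower ((k + 2) / k) (/ p)).
  assert (Hy: 0 < y) by (unfold y, Rpower; apply exp_pos).
  set (M := 2 * y + 1).
  exists (atan M).
  pose proof (atan_bound M) as [B1 B2].
  assert (A0: 0 < atan M) by (rewrite <- atan_0; apply atan_increasing; unfold M; lra).
  assert (Hx: 0 < atan M < PI / 2) by lra.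
  split; auto.
  set (x := atan M) in *.
  pose proof PI_4.
  pose proof (hsin x Hx). pose proof (hcos x Hx).
  assert (Ht: tan x = M) by (unfold x; apply tan_atan).
  assert (Hr: y < tan x / x).
  { rewrite Ht. apply (Rmult_lt_reg_r x); [lra|]. replace (M / x * x) with M by (field; lra).
    unfold M. nra. }
  assert (P1: (k + 2) / k < Rpower (tan x / x) p).
  { replace ((k + 2) / k) with (Rpower y p).
    - apply Rlt_Rpower_l; lra.
    - unfold y. rewrite Rpower_mult. replace (/ p * p) with 1 by (field; lra).
      apply Rpower_1. apply Rdiv_lt_0_compat; lra. }
  assert (P0: 0 < Rpower (sin x / x) (k * p)) by (unfold Rpower; apply exp_pos).
  assert (k / (k + 2) * ((k + 2) / k) = 1) by (field; lra).
  assert (0 < 2 / (k + 2)) by (apply Rdiv_lt_0_compat; lra).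
  assert (0 < k / (k + 2)) by (apply Rdiv_lt_0_compat; lra).
  assert (k / (k + 2) * ((k + 2) / k) < k / (k + 2) * Rpower (tan x / x) p) by (apply Rmult_lt_compat_l; lra).
  assert (0 < 2 / (k + 2) * Rpower (sin x / x) (k * p)) by (apply Rmult_lt_0_compat; lra).
  lra.
Qed.

Lemma phi_mono : forall r c C, 0 <= r -> c <= C ->
  - C + r * C^2 / 2 - r^2 * C^3 / 6 <= - c + r * c^2 / 2 - r^2 * c^3 / 6.
Proof.
  intros r c C Hr HcC.
  set (u := r * c). set (v := r * C).
  assert (E: (- c + r * c^2 / 2 - r^2 * c^3 / 6) - (- C + r * C^2 / 2 - r^2 * C^3 / 6)
     = (C - c) * (1 - (u + v) / 2 + (u^2 + u*v + v^2) / 6)) by (unfold u, v; field).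
  assert (B: 0 < 1 - (u + v) / 2 + (u^2 + u*v + v^2) / 6).
  { pose proof (pow2_ge_0 (u + v - 2)). pose proof (pow2_ge_0 (u - v)). nra. }
  assert (0 <= (C - c) * (1 - (u + v) / 2 + (u^2 + u*v + v^2) / 6)) by (apply Rmult_le_pos; lra).
  lra.
Qed.

Lemma forward_neg : forall k p, 1 <= k -> p < - (12 / (5 * (k + 2))) -> exists x, 0 < x < PI / 2 /\
  1 <= 2 / (k + 2) * Rpower (sin x / x) (k * p) + k / (k + 2) * Rpower (tan x / x) p.
Proof.
  intros k p Hk Hp.
  set (r := - p). set (a := k * r).
  assert (E12: 12 / (5 * (k + 2)) * (k + 2) = 12/5) by (field; lra).
  assert (Hr0: 0 < r) by (unfold r; assert (0 < 12 / (5 * (k + 2))) by (apply Rdiv_lt_0_compat; lra); lra).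
  set (eta := a + 2 * r - 12/5).
  assert (Heta: 0 < eta) by (unfold eta, a, r; nra).
  set (t := Rmin (1/100) (eta / (36 * (1 + r^2)))).
  assert (Ht0: 0 < t).
  { unfold t. apply Rmin_glb_lt; [lra|]. apply Rdiv_lt_0_compat; [lra|]. pose proof (pow2_ge_0 r). lra. }
  assert (Ht1: t <= 1/100) by (unfold t; apply Rmin_l).
  assert (Ht2: t * (36 * (1 + r^2)) <= eta).
  { assert (t <= eta / (36 * (1 + r^2))) by (unfold t; apply Rmin_r).
    pose proof (pow2_ge_0 r).
    apply (Rmult_le_compat_r (36 * (1 + r^2))) in H; [|lra].
    replace (eta / (36 * (1 + r ^ 2)) * (36 * (1 + r ^ 2))) with eta in H by (field; lra). lra. }
  set (x := sqrt t).
  assert (Hx2: x^2 = t) by (unfold x; apply pow2_sqrt; lra).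
  assert (Hxp: 0 < x) by (unfold x; apply sqrt_lt_R0; lra).
  assert (Hx1: x <= 1/10) by nra.
  pose proof PI2_3_2.
  assert (Hx: 0 < x < PI / 2) by lra.
  exists x. split; auto.
  rewrite f_exp_form by auto. fold r. fold a.
  pose proof (hsin x Hx). pose proof (hcos x Hx).
  assert (Hsu: sin x <= x * Sup t) by (rewrite <- Hx2; apply sin_up; lra).
  assert (Hcl: Pclo t <= cos x) by (rewrite <- Hx2; apply cos_lo; lra).
  assert (HSA: Sup t <= D3f (Alo t)).
  { pose proof (SA t ltac:(lra)). pose proof (SA_id t).
    assert (0 < t^3 * SA_p t) by (apply Rmult_lt_0_compat; [apply pow_lt|]; lra). lra. }
  assert (HSC: Sup t <= Pclo t * T3f (Chi t)).
  { pose proof (SC t ltac:(lra)). pose proof (SC_id t).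
    assert (0 < t^3 * SC_p t) by (apply Rmult_lt_0_compat; [apply pow_lt|]; lra). lra. }
  assert (HSupp: 0 < Sup t) by (unfold Sup; nra).
  assert (HPcpos: 0 < Pclo t) by (unfold Pclo; nra).
  assert (HA0: t / 6 <= Alo t) by (unfold Alo; nra).
  assert (HC0: t / 3 <= Chi t) by (unfold Chi; nra).
  assert (HC1: Chi t <= t / 2) by (unfold Chi; nra).
  assert (Hal: Alo t <= al x).
  { unfold al. rewrite <- (ln_exp (Alo t)). apply ln_le_mono; [apply exp_pos|].
    pose proof (expn_D3 (Alo t) ltac:(lra)) as HD. fold (D3f (Alo t)) in HD.
    pose proof (exp_inv_mul (Alo t)) as HI. pose proof (exp_pos (Alo t)). pose proof (exp_pos (- Alo t)).
    apply (Rmult_le_reg_r (sin x)); [lra|]. replace (x / sin x * sin x) with x by (field; lra).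
    apply (Rmult_le_reg_r (exp (- Alo t))); [lra|].
    replace (exp (Alo t) * sin x * exp (- Alo t)) with (sin x * (exp (- Alo t) * exp (Alo t))) by ring.
    rewrite HI. nra. }
  assert (Hcc: cc x <= Chi t).
  { unfold cc. rewrite <- (ln_exp (Chi t)). apply ln_le_mono; [apply htx_pos; auto|].
    pose proof (exp_T3 (Chi t) ltac:(lra)) as HT. fold (T3f (Chi t)) in HT.
    rewrite htan.
    apply (Rmult_le_reg_r (x * cos x)); [nra|].
    replace (sin x / cos x / x * (x * cos x)) with (sin x) by (field; lra).
    assert (sin x <= x * (Pclo t * T3f (Chi t))) by nra.
    assert (x * (Pclo t * T3f (Chi t)) <= exp (Chi t) * (x * cos x)).
    { assert (0 < T3f (Chi t)) by (unfold T3f; nra). 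
      replace (x * (Pclo t * T3f (Chi t))) with ((x * T3f (Chi t)) * Pclo t) by ring.
      replace (exp (Chi t) * (x * cos x)) with ((x * exp (Chi t)) * cos x) by ring.
      apply Rmult_le_compat; nra. }
    lra. }
  pose proof (cc_pos x Hx) as Hccp. pose proof (al_pos x Hx) as Halp.
  set (A := Alo t) in *. set (C := Chi t) in *. set (al0 := al x) in *. set (c0 := cc x) in *.
  assert (Q0: 0 <= 2 * A + a * A^2 - C + r * C^2 / 2 - r^2 * C^3 / 6).
  { assert (E: 2 * A - C = - t^2/15 - t^3/40) by (unfold A, C, Alo, Chi; field).
    assert (Ha: 0 < a) by (unfold a; nra).
    assert (a * A^2 >= a * t^2/36).
    { assert ((t/6)^2 <= A^2) by (apply pow_le_up; lra). apply Rle_ge.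
      replace (a * t^2/36) with (a * (t/6)^2) by field. apply Rmult_le_compat_l; lra. }
    assert (r * C^2 / 2 >= r * t^2 / 18).
    { assert ((t/3)^2 <= C^2) by (apply pow_le_up; lra). apply Rle_ge.
      replace (r * t^2/18) with (r * (t/3)^2 / 2) by field. apply Rmult_le_compat_r; [lra|]. apply Rmult_le_compat_l; lra. }
    assert (r^2 * C^3 / 6 <= r^2 * t^3 / 48).
    { assert (C^3 <= (t/2)^3) by (apply pow_le_up; lra). pose proof (pow2_ge_0 r). nra. }
    assert (HP: t^2 * (eta / 36 - t * (1/40 + r^2/48)) >= 0).
    { apply Rle_ge. apply Rmult_le_pos; [apply pow2_ge_0|]. pose proof (pow2_ge_0 r). nra. }
    unfold eta in HP. lra. }
  assert (Q1: 0 <= 2 * al0 + a * al0^2 - c0 + r * c0^2 / 2 - r^2 * c0^3 / 6).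
  { pose proof (phi_mono r c0 C ltac:(lra) Hcc).
    assert (HA2: A^2 <= al0^2) by (apply pow_le_up; lra).
    assert (Ha: 0 < a) by (unfold a; nra).
    assert (a * A^2 <= a * al0^2) by (apply Rmult_le_compat_l; lra). lra. }
  assert (Ha: 0 < a) by (unfold a; nra).
  pose proof (exp_T2 (a * al0) ltac:(apply Rmult_le_pos; lra)) as X1.
  pose proof (expn_D3 (r * c0) ltac:(apply Rmult_le_pos; lra)) as X2.
  assert (Ek: k * (1 - r * c0 + (r * c0)^2/2 - (r * c0)^3/6) = k + 2 - 2 - a * (c0 - r * c0^2/2 + r^2 * c0^3/6)) by (unfold a; field).
  assert (0 <= a * (2 * al0 + a * al0^2 - c0 + r * c0^2 / 2 - r^2 * c0^3 / 6)) as X3 by (apply Rmult_le_pos; lra).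
  assert (X4: k * (1 - r * c0 + (r * c0)^2/2 - (r * c0)^3/6) <= k * exp (- (r * c0))) by (apply Rmult_le_compat_l; lra).
  assert (2 * exp (a * al0) + k * exp (- (r * c0)) >= k + 2).
  { lra. }
  apply (Rmult_le_reg_r (k + 2)); [lra|].
  replace ((2 / (k + 2) * exp (a * al0) + k / (k + 2) * exp (- (r * c0))) * (k + 2))
    with (2 * exp (a * al0) + k * exp (- (r * c0))) by (field; lra).
  lra.
Qed.

Theorem theorem3p2 (k p : R) (hk : 1 <= k) (hp : p <> 0) :
  (forall x : R, 0 < x < PI / 2 ->
     2 / (k + 2) * Rpower (sin x / x) (k * p)
       + k / (k + 2) * Rpower (tan x / x) p < 1)
  <-> (- (12 / (5 * (k + 2))) <= p /\ p < 0).
Proof.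
  split.
  - intros H. destruct (Rlt_le_dec p 0) as [Hn|Hn].
    + split; auto. destruct (Rle_lt_dec (- (12 / (5 * (k + 2)))) p) as [L|L]; auto.
      exfalso. destruct (forward_neg k p hk L) as [x [Hx Hf]]. specialize (H x Hx). lra.
    + exfalso. assert (Hp: 0 < p) by lra.
      destruct (forward_pos k p hk Hp) as [x [Hx Hf]]. specialize (H x Hx). lra.
  - intros [H1 H2] x Hx. apply backward; auto.
Qed.
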